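(* Let $I_{\mathrm{C}}=\langle p_1,p_2,p_3\rangle$ be the ideal of $\mathbb{Q}[x_1,x_2,x_3,d_1,d_2,d_3,L]$ generated by $p_1,p_2,p_3$, and let $I_{\mathrm{C\_sym}}=I_{\mathrm{C}}\cap \operatorname{Sym}\mathbb{Q}[M,L]$. Then $I_{\mathrm{C\_sym}}$ is finitely generated as an ideal of the ring $\operatorname{Sym}\mathbb{Q}[M,L]$; the seven polynomials $\tilde p_2,\tilde p_3,\tilde p_4,\tilde p_5,\tilde p_6,\tilde p_7,\tilde p_8$ belong to $I_{\mathrm{C\_sym}}$ and generate it as an ideal of $\operatorname{Sym}\mathbb{Q}[M,L]$.
   Context: Work in the polynomial ring $\mathbb{Q}[M,L]=\mathbb{Q}[x_1,x_2,x_3,d_1,d_2,d_3,L]$. Define $p_1=x_2^2+x_3^2-d_1^2$, $p_2=x_3^2+x_1^2-d_2^2$, $p_3=x_1^2+x_2^2-d_3^2$. The symmetric group $S_3$ acts on this ring by $\sigma(x_i)=x_{\sigma(i)}$, $\sigma(d_i)=d_{\sigma(i)}$, $\sigma(L)=L$ (i.e. by simultaneously permuting the columns of the matrix $M=\begin{pmatrix}x_1&x_2&x_3\\ d_1&d_2&d_3\end{pmatrix}$). $\operatorname{Sym}\mathbb{Q}[M,L]$ denotes the subring of polynomials invariant under this action (multisymmetric polynomials). Define $\tilde p_2=p_1+p_2+p_3$, $\tilde p_3=d_1p_1+d_2p_2+d_3p_3$, $\tilde p_4=x_1p_1+x_2p_2+x_3p_3$, $\tilde p_5=x_1d_1p_1+x_2d_2p_2+x_3d_3p_3$,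 $\tilde p_6=x_1^2p_1+x_2^2p_2+x_3^2p_3$, $\tilde p_7=d_1^2p_1+d_2^2p_2+d_3^2p_3$, $\tilde p_8=x_1^2d_1^2p_1+x_2^2d_2^2p_2+x_3^2d_3^2p_3$. *)

(* Defs.v *)
(* Q[x1,x2,x3,d1,d2,d3,L] is realised as the iterated
   univariate polynomial ring over rat: innermost variable x1, then x2, x3,
   d1, d2, d3, and outermost L. *)
From HB Require Import structures.
From mathcomp Require Import all_boot all_order all_algebra all_fingroup.
Set Implicit Arguments. Unset Strict Implicit. Unset Printing Implicit Defensive.
Import GRing.Theory.
Local Open Scope ring_scope.

Definition P1 : idomainType := {poly rat}.
Definition P2 : idomainType := {poly P1}.
Definition P3 : idomainType := {poly P2}.
Definition P4 : idomainType := {poly P3}.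
Definition P5 : idomainType := {poly P4}.
Definition P6 : idomainType := {poly P5}.
Definition P7 : idomainType := {poly P6}.

Definition emb (c : rat) : P7 :=
  (((((((c%:P : P1)%:P : P2)%:P : P3)%:P : P4)%:P : P5)%:P : P6)%:P : P7).

Definition X1 : P7 := ((((((('X : P1)%:P : P2)%:P : P3)%:P : P4)%:P : P5)%:P : P6)%:P : P7).
Definition X2 : P7 := (((((('X : P2)%:P : P3)%:P : P4)%:P : P5)%:P : P6)%:P : P7).
Definition X3 : P7 := ((((('X : P3)%:P : P4)%:P : P5)%:P : P6)%:P : P7).
Definition D1 : P7 := (((('X : P4)%:P : P5)%:P : P6)%:P : P7).
Definition D2 : P7 := ((('X : P5)%:P : P6)%:P : P7).
Definition D3 : P7 := (('X : P6)%:P : P7).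
Definition LL : P7 := ('X : P7).

Definition pev (A : nzRingType) (B : comNzRingType) (f : A -> B) (y : B)
  (p : {poly A}) : B := (map_poly f p).[y].

Definition subst7 (y1 y2 y3 z1 z2 z3 w : P7) (p : P7) : P7 :=
  let f1 : P1 -> P7 := @pev rat P7 emb y1 in
  let f2 : P2 -> P7 := @pev P1 P7 f1 y2 in
  let f3 : P3 -> P7 := @pev P2 P7 f2 y3 in
  let f4 : P4 -> P7 := @pev P3 P7 f3 z1 in
  let f5 : P5 -> P7 := @pev P4 P7 f4 z2 in
  let f6 : P6 -> P7 := @pev P5 P7 f5 z3 in
  @pev P6 P7 f6 w p.

Definition xv (i : 'I_3) : P7 :=
  if nat_of_ord i == 0%N then X1 else if nat_of_ord i == 1%N then X2 else X3.
Definition dv (i : 'I_3) : P7 :=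
  if nat_of_ord i == 0%N then D1 else if nat_of_ord i == 1%N then D2 else D3.

Definition act (s : 'S_3) (p : P7) : P7 :=
  subst7 (xv (s ord0)) (xv (s (inord 1))) (xv (s (inord 2)))
         (dv (s ord0)) (dv (s (inord 1))) (dv (s (inord 2))) LL p.

Definition symmetric (p : P7) : Prop := forall s : 'S_3, act s p = p.

Definition p1 : P7 := X2 ^+ 2 + X3 ^+ 2 - D1 ^+ 2.
Definition p2 : P7 := X3 ^+ 2 + X1 ^+ 2 - D2 ^+ 2.
Definition p3 : P7 := X1 ^+ 2 + X2 ^+ 2 - D3 ^+ 2.

Definition in_IC (p : P7) : Prop :=
  exists a1 a2 a3 : P7, p = a1 * p1 + a2 * p2 + a3 * p3.

Definition in_ICsym (p : P7) : Prop := in_IC p /\ symmetric p.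

Definition in_sym_ideal (gens : seq P7) (p : P7) : Prop :=
  exists c : seq P7, size c = size gens /\ (forall q, q \in c -> symmetric q) /\
    p = \sum_(i < size gens) c`_i * gens`_i.

Definition pt2 : P7 := p1 + p2 + p3.
Definition pt3 : P7 := D1 * p1 + D2 * p2 + D3 * p3.
Definition pt4 : P7 := X1 * p1 + X2 * p2 + X3 * p3.
Definition pt5 : P7 := X1 * D1 * p1 + X2 * D2 * p2 + X3 * D3 * p3.
Definition pt6 : P7 := X1 ^+ 2 * p1 + X2 ^+ 2 * p2 + X3 ^+ 2 * p3.
Definition pt7 : P7 := D1 ^+ 2 * p1 + D2 ^+ 2 * p2 + D3 ^+ 2 * p3.
Definition pt8 : P7 := X1 ^+ 2 * D1 ^+ 2 * p1 + X2 ^+ 2 * D2 ^+ 2 * p2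
                     + X3 ^+ 2 * D3 ^+ 2 * p3.

Definition ptilde : seq P7 := [:: pt2; pt3; pt4; pt5; pt6; pt7; pt8].

(* Main.v *)
Require Import Defs.
From HB Require Import structures.
From mathcomp Require Import all_boot all_order all_algebra all_fingroup.
From mathcomp Require Import ring.
Set Implicit Arguments. Unset Strict Implicit. Unset Printing Implicit Defensive.
Import GRing.Theory.
Local Open Scope ring_scope.

Definition rm (A B : nzRingType) (f : A -> B) :=
  [/\ forall a b, f (a - b) = f a - f b, f 1 = 1 & forall a b, f (a*b) = f a * f b].

Section Pev.
Variables (A : nzRingType) (B : comNzRingType) (f : A -> B).
Hypotheses (fB : forall a b, f (a - b) = f a - f b) (f1 : f 1 = 1) (fM : forall a b, f (a*b) = f a * f b).
HB.instance Definition _ := GRing.isZmodMorphism.Build A B f fB.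
HB.instance Definition _ := GRing.isMonoidMorphism.Build A B f (conj f1 fM).
Variable y : B.
Lemma cfu : commr_rmorph f y. Proof. by move=> x; exact: mulrC. Qed.
Lemma pevE p : pev f y p = horner_morph cfu p. Proof. by []. Qed.
Lemma pev_rm0 : rm (pev f y).
Proof. by split=> [p q|| p q]; rewrite !pevE ?rmorphB ?rmorph1 ?rmorphM. Qed.
Lemma pevC0 c : pev f y c%:P = f c.
Proof. by rewrite !pevE horner_morphC. Qed.
Lemma pevX0 : pev f y 'X = y.
Proof. by rewrite !pevE horner_morphX. Qed.
End Pev.

Lemma pev_rm (A : nzRingType) (B : comNzRingType) (f : A -> B) y : rm f -> rm (pev f y).
Proof. by case=> *; apply: pev_rm0. Qed.
Lemma pevC (A : nzRingType) (B : comNzRingType) (f : A -> B) y c : rm f -> pev f y c%:P = f c.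
Proof. by case=> *; apply: pevC0. Qed.
Lemma pevX (A : nzRingType) (B : comNzRingType) (f : A -> B) y : rm f -> pev f y 'X = y.
Proof. by case=> *; apply: pevX0. Qed.

Lemma polyC_rm (A : nzRingType) : rm (@polyC A).
Proof. by split=> [a b||a b]; rewrite ?polyCB ?polyCM. Qed.
Lemma rm_comp (A B C : nzRingType) (f : A -> B) (g : B -> C) : rm f -> rm g -> rm (fun x => g (f x)).
Proof. by case=> fB f1 fM [gB g1 gM]; split=> [a b||a b]; rewrite ?fB ?gB ?f1 ?g1 ?fM ?gM. Qed.
Lemma emb_rm : rm emb.
Proof.
exact: (rm_comp (rm_comp (rm_comp (rm_comp (rm_comp (rm_comp (polyC_rm rat) (polyC_rm P1)) (polyC_rm P2)) (polyC_rm P3)) (polyC_rm P4)) (polyC_rm P5)) (polyC_rm P6)).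
Qed.

Lemma subst7_rm y1 y2 y3 z1 z2 z3 w : rm (subst7 y1 y2 y3 z1 z2 z3 w).
Proof. Time (do 7 apply: pev_rm; exact: emb_rm). Time Qed.

Section S7.
Variables y1 y2 y3 z1 z2 z3 w : P7.
Let H := subst7_rm y1 y2 y3 z1 z2 z3 w.
HB.instance Definition _ := GRing.isZmodMorphism.Build P7 P7 (subst7 y1 y2 y3 z1 z2 z3 w) (let: And3 a _ _ := H in a).
HB.instance Definition _ := GRing.isMonoidMorphism.Build P7 P7 (subst7 y1 y2 y3 z1 z2 z3 w) (let: And3 _ b c := H in conj b c).
End S7.

Ltac rmt := repeat match goal with |- rm (pev _ _) => apply: pev_rm | |- rm emb => exact: emb_rm end.
Ltac pevs := repeat (first [ rewrite pevC; [|rmt] | rewrite pevX; [|rmt] ]).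
Lemma sX1 y1 y2 y3 z1 z2 z3 w : subst7 y1 y2 y3 z1 z2 z3 w X1 = y1.
Proof. rewrite /subst7 /X1. pevs. reflexivity. Qed.
Lemma sX2 y1 y2 y3 z1 z2 z3 w : subst7 y1 y2 y3 z1 z2 z3 w X2 = y2.
Proof. rewrite /subst7 /X2. pevs. reflexivity. Qed.
Lemma sX3 y1 y2 y3 z1 z2 z3 w : subst7 y1 y2 y3 z1 z2 z3 w X3 = y3.
Proof. rewrite /subst7 /X3. pevs. reflexivity. Qed.
Lemma sD1 y1 y2 y3 z1 z2 z3 w : subst7 y1 y2 y3 z1 z2 z3 w D1 = z1.
Proof. rewrite /subst7 /D1. pevs. reflexivity. Qed.
Lemma sD2 y1 y2 y3 z1 z2 z3 w : subst7 y1 y2 y3 z1 z2 z3 w D2 = z2.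
Proof. rewrite /subst7 /D2. pevs. reflexivity. Qed.
Lemma sD3 y1 y2 y3 z1 z2 z3 w : subst7 y1 y2 y3 z1 z2 z3 w D3 = z3.
Proof. rewrite /subst7 /D3. pevs. reflexivity. Qed.
Lemma sLL y1 y2 y3 z1 z2 z3 w : subst7 y1 y2 y3 z1 z2 z3 w LL = w.
Proof. rewrite /subst7 /LL. pevs. reflexivity. Qed.
Lemma semb y1 y2 y3 z1 z2 z3 w c : subst7 y1 y2 y3 z1 z2 z3 w (emb c) = emb c.
Proof. rewrite /subst7.
rewrite -[X in pev _ _ X]/(((((((c%:P : P1)%:P : P2)%:P : P3)%:P : P4)%:P : P5)%:P : P6)%:P : P7).
pevs. reflexivity. Qed.

Lemma level (A : nzRingType) (g : {poly A} -> P7) (v : P7) (S : P7 -> Prop) :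
 (forall a b, S a -> S b -> S (a + b)) -> (forall a, S a -> S (a * v)) ->
 (forall p c, g (p * 'X + c%:P) = g p * v + g c%:P) ->
 (forall c, S (g c%:P)) -> forall p, S (g p).
Proof.
move=> Sadd Smul gE Sc; elim/poly_ind => [|p c IH].
  have := Sc 0; rewrite polyC0; exact.
rewrite gE; apply: Sadd; [exact: Smul | exact: Sc].
Qed.

Lemma all_P7 (S : P7 -> Prop) :
  (forall c, S (emb c)) -> (forall a b, S a -> S b -> S (a + b)) ->
  (forall a, S a -> S (a * X1)) -> (forall a, S a -> S (a * X2)) ->
  (forall a, S a -> S (a * X3)) -> (forall a, S a -> S (a * D1)) ->
  (forall a, S a -> S (a * D2)) -> (forall a, S a -> S (a * D3)) ->
  (forall a, S a -> S (a * LL)) -> forall p, S p.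
Proof.
move=> Sc Sadd S1 S2 S3 S4 S5 S6 S7 p.
apply: (@level P6 (fun q : {poly P6} => q : P7) LL S Sadd S7 _ _ p) => [q c|c]; first reflexivity.
apply: (@level P5 (fun q : {poly P5} => ((q : P6)%:P : P7)) D3 S Sadd S6 _ _ c) => [q d|d].
  by rewrite polyCD polyCM.
apply: (@level P4 (fun q : {poly P4} => (((q : P5)%:P : P6)%:P : P7)) D2 S Sadd S5 _ _ d) => [q e|e].
  by rewrite !polyCD !polyCM.
apply: (@level P3 (fun q : {poly P3} => ((((q : P4)%:P : P5)%:P : P6)%:P : P7)) D1 S Sadd S4 _ _ e) => [q f|f].
  by rewrite !polyCD !polyCM.
apply: (@level P2 (fun q : {poly P2} => (((((q : P3)%:P : P4)%:P : P5)%:P : P6)%:P : P7)) X3 S Sadd S3 _ _ f) => [q h|h].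
  by rewrite !polyCD !polyCM.
apply: (@level P1 (fun q : {poly P1} => ((((((q : P2)%:P : P3)%:P : P4)%:P : P5)%:P : P6)%:P : P7)) X2 S Sadd S2 _ _ h) => [q k|k].
  by rewrite !polyCD !polyCM.
apply: (@level rat (fun q : {poly rat} => (((((((q : P1)%:P : P2)%:P : P3)%:P : P4)%:P : P5)%:P : P6)%:P : P7)) X1 S Sadd S1 _ _ k) => [q l|l].
  by rewrite !polyCD !polyCM.
exact: Sc.
Qed.

Lemma rm0 (A B : nzRingType) (f : A -> B) : rm f -> f 0 = 0.
Proof. case=> fB _ _; have := fB 0 0; rewrite !subrr; exact. Qed.
Lemma rmN (A B : nzRingType) (f : A -> B) : rm f -> forall a, f (- a) = - f a.
Proof. move=> H a; have [fB _ _] := H; have := fB 0 a; rewrite !sub0r (rm0 H) sub0r; exact. Qed.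
Lemma rmD (A B : nzRingType) (f : A -> B) : rm f -> forall a b, f (a + b) = f a + f b.
Proof. move=> H a b; have [fB _ _] := H; have := fB a (- b); rewrite opprK (rmN H) opprK; exact. Qed.

Lemma subst_unique (f g : P7 -> P7) : rm f -> rm g ->
  (forall c, f (emb c) = g (emb c)) -> f X1 = g X1 -> f X2 = g X2 -> f X3 = g X3 ->
  f D1 = g D1 -> f D2 = g D2 -> f D3 = g D3 -> f LL = g LL -> forall p, f p = g p.
Proof.
move=> Hf Hg Hc e1 e2 e3 e4 e5 e6 e7.
have [_ _ fM] := Hf; have [_ _ gM] := Hg.
apply: all_P7 => //.
- by move=> a b ea eb; rewrite (rmD Hf) (rmD Hg) ea eb.
- by move=> a ea; rewrite fM gM ea e1.
- by move=> a ea; rewrite fM gM ea e2.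
- by move=> a ea; rewrite fM gM ea e3.
- by move=> a ea; rewrite fM gM ea e4.
- by move=> a ea; rewrite fM gM ea e5.
- by move=> a ea; rewrite fM gM ea e6.
- by move=> a ea; rewrite fM gM ea e7.
Qed.

Definition xn (n : nat) : P7 := if n == 0%N then X1 else if n == 1%N then X2 else X3.
Definition dn (n : nat) : P7 := if n == 0%N then D1 else if n == 1%N then D2 else D3.
Definition pick (a b c n : nat) : nat := if n == 0%N then a else if n == 1%N then b else c.
Definition tsub (a b c : nat) : P7 -> P7 := subst7 (xn a) (xn b) (xn c) (dn a) (dn b) (dn c) LL.

Lemma tsub_rm a b c : rm (tsub a b c). Proof. exact: subst7_rm. Qed.
Lemma tX1 a b c : tsub a b c X1 = xn a. Proof. exact: sX1. Qed.
Lemma tX2 a b c : tsub a b c X2 = xn b. Proof. exact: sX2. Qed.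
Lemma tX3 a b c : tsub a b c X3 = xn c. Proof. exact: sX3. Qed.
Lemma tD1 a b c : tsub a b c D1 = dn a. Proof. exact: sD1. Qed.
Lemma tD2 a b c : tsub a b c D2 = dn b. Proof. exact: sD2. Qed.
Lemma tD3 a b c : tsub a b c D3 = dn c. Proof. exact: sD3. Qed.
Lemma tLL a b c : tsub a b c LL = LL. Proof. exact: sLL. Qed.
Lemma temb a b c q : tsub a b c (emb q) = emb q. Proof. exact: semb. Qed.

Lemma txn a b c k : tsub a b c (xn k) = xn (pick a b c k).
Proof. rewrite /xn /pick; case: (k == 0%N); first exact: tX1. case: (k == 1%N); [exact: tX2 | exact: tX3]. Qed.
Lemma tdn a b c k : tsub a b c (dn k) = dn (pick a b c k).
Proof. rewrite /dn /pick; case: (k == 0%N); first exact: tD1. case: (k == 1%N); [exact: tD2 | exact: tD3]. Qed.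

Lemma tsub_comp a b c a' b' c' p :
  tsub a b c (tsub a' b' c' p) = tsub (pick a b c a') (pick a b c b') (pick a b c c') p.
Proof.
apply: (subst_unique (f := fun q => tsub a b c (tsub a' b' c' q))).
- apply: rm_comp; exact: tsub_rm.
- exact: tsub_rm.
- by move=> q; rewrite !temb.
- by rewrite tX1 txn tX1.
- by rewrite tX2 txn tX2.
- by rewrite tX3 txn tX3.
- by rewrite tD1 tdn tD1.
- by rewrite tD2 tdn tD2.
- by rewrite tD3 tdn tD3.
- by rewrite !tLL.
Qed.

Lemma tsub_id p : tsub 0 1 2 p = p.
Proof.
apply: (subst_unique (f := tsub 0 1 2) (g := id)).
- exact: tsub_rm.
- by split.
- by move=> q; rewrite temb.
- exact: tX1.
- exact: tX2.
- exact: tX3.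
- exact: tD1.
- exact: tD2.
- exact: tD3.
- exact: tLL.
Qed.

Definition ff (a b c : nat) (i : 'I_3) : 'I_3 := inord (pick a b c i).

Lemma act_tsub (s : 'S_3) (p : P7) : Defs.act s p = tsub (s ord0) (s (inord 1)) (s (inord 2)) p.
Proof. reflexivity. Qed.

Lemma perm_of a b c : (a < 3)%N -> (b < 3)%N -> (c < 3)%N -> injective (ff a b c) ->
   forall q, Defs.symmetric q -> tsub a b c q = q.
Proof.
move=> ha hb hc inj q sq.
have := sq (perm inj); rewrite act_tsub !permE /ff !inordK //=.
Qed.

Lemma perm3 (a b c : nat) : a != b -> a != c -> b != c -> (a < 3)%N -> (b < 3)%N -> (c < 3)%N ->
  (a,b,c) = (0,1,2)%N \/ (a,b,c) = (0,2,1)%N \/ (a,b,c) = (1,0,2)%N \/ (a,b,c) = (1,2,0)%N \/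
      (a,b,c) = (2,0,1)%N \/ (a,b,c) = (2,1,0)%N.
Proof.
case: a => [|[|[|a]]]; case: b => [|[|[|b]]]; case: c => [|[|[|c]]] => //= *;
  by [left|right;left|right;right;left|do 3 right; left|do 4 right; left|do 5 right].
Qed.

Lemma ffi012 : injective (ff 0 1 2).
Proof. move=> i j E; apply/val_inj; move: E; case: i j => [[|[|[|i]]] Hi] [[|[|[|j]]] Hj] //= /(congr1 val); rewrite /ff /pick /= !inordK //. Qed.
Lemma ffi021 : injective (ff 0 2 1).
Proof. move=> i j E; apply/val_inj; move: E; case: i j => [[|[|[|i]]] Hi] [[|[|[|j]]] Hj] //= /(congr1 val); rewrite /ff /pick /= !inordK //. Qed.
Lemma ffi102 : injective (ff 1 0 2).
Proof. move=> i j E; apply/val_inj; move: E; case: i j => [[|[|[|i]]] Hi] [[|[|[|j]]] Hj] //= /(congr1 val); rewrite /ff /pick /= !inordK //. Qed.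
Lemma ffi120 : injective (ff 1 2 0).
Proof. move=> i j E; apply/val_inj; move: E; case: i j => [[|[|[|i]]] Hi] [[|[|[|j]]] Hj] //= /(congr1 val); rewrite /ff /pick /= !inordK //. Qed.
Lemma ffi201 : injective (ff 2 0 1).
Proof. move=> i j E; apply/val_inj; move: E; case: i j => [[|[|[|i]]] Hi] [[|[|[|j]]] Hj] //= /(congr1 val); rewrite /ff /pick /= !inordK //. Qed.
Lemma ffi210 : injective (ff 2 1 0).
Proof. move=> i j E; apply/val_inj; move: E; case: i j => [[|[|[|i]]] Hi] [[|[|[|j]]] Hj] //= /(congr1 val); rewrite /ff /pick /= !inordK //. Qed.
Lemma symE q : Defs.symmetric q <->
  tsub 0 1 2 q = q /\ tsub 0 2 1 q = q /\ tsub 1 0 2 q = q /\ tsub 1 2 0 q = q /\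
      tsub 2 0 1 q = q /\ tsub 2 1 0 q = q.
Proof.
split.
  move=> sq; split; [|split; [|split; [|split; [|split]]]].
  - exact: (@perm_of 0 1 2 erefl erefl erefl (ffi012) q sq).
  - exact: (@perm_of 0 2 1 erefl erefl erefl (ffi021) q sq).
  - exact: (@perm_of 1 0 2 erefl erefl erefl (ffi102) q sq).
  - exact: (@perm_of 1 2 0 erefl erefl erefl (ffi120) q sq).
  - exact: (@perm_of 2 0 1 erefl erefl erefl (ffi201) q sq).
  - exact: (@perm_of 2 1 0 erefl erefl erefl (ffi210) q sq).
case=> h1 [h2 [h3 [h4 [h5 h6]]]] s; rewrite act_tsub.
have i01 : (ord0 : 'I_3) != inord 1 by rewrite -val_eqE /= inordK.
have i02 : (ord0 : 'I_3) != inord 2 by rewrite -val_eqE /= inordK.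
have i12 : (inord 1 : 'I_3) != inord 2 by rewrite -val_eqE /= !inordK.
have hab : (s ord0 != s (inord 1) :> nat) by rewrite val_eqE (inj_eq perm_inj).
have hac : (s ord0 != s (inord 2) :> nat) by rewrite val_eqE (inj_eq perm_inj).
have hbc : (s (inord 1) != s (inord 2) :> nat) by rewrite val_eqE (inj_eq perm_inj).
case: (perm3 hab hac hbc (ltn_ord (s ord0)) (ltn_ord (s (inord 1))) (ltn_ord (s (inord 2))))
  => [[-> -> ->]|[[-> -> ->]|[[-> -> ->]|[[-> -> ->]|[[-> -> ->]|[-> -> ->]]]]]].
- exact: h1.
- exact: h2.
- exact: h3.
- exact: h4.
- exact: h5.
- exact: h6.
Qed.

Lemma xn0 : xn 0 = X1. Proof. reflexivity. Qed.
Lemma xn1 : xn 1 = X2. Proof. reflexivity. Qed.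
Lemma xn2 : xn 2 = X3. Proof. reflexivity. Qed.
Lemma dn0 : dn 0 = D1. Proof. reflexivity. Qed.
Lemma dn1 : dn 1 = D2. Proof. reflexivity. Qed.
Lemma dn2 : dn 2 = D3. Proof. reflexivity. Qed.

Lemma act_rm (s : 'S_3) : rm (Defs.act s). Proof. exact: subst7_rm. Qed.

Lemma rm_nat (A B : nzRingType) (f : A -> B) : rm f -> forall n, f n%:R = n%:R.
Proof.
move=> H; have [_ f1 _] := H; elim=> [|n IH]; first exact: rm0.
by rewrite -addn1 !natrD (rmD H) IH f1.
Qed.
Lemma rm_exp (A B : nzRingType) (f : A -> B) : rm f -> forall a n, f (a ^+ n) = f a ^+ n.
Proof.
move=> H a; have [_ f1 fM] := H; elim=> [|n IH]; first by rewrite !expr0.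
by rewrite !exprS fM IH.
Qed.

Section SL.
Variables y1 y2 y3 z1 z2 z3 w : P7.
Let H := subst7_rm y1 y2 y3 z1 z2 z3 w.
Lemma ssB a b : subst7 y1 y2 y3 z1 z2 z3 w (a - b) = subst7 y1 y2 y3 z1 z2 z3 w a - subst7 y1 y2 y3 z1 z2 z3 w b.
Proof. by have [fB _ _] := H. Qed.
Lemma ssD a b : subst7 y1 y2 y3 z1 z2 z3 w (a + b) = subst7 y1 y2 y3 z1 z2 z3 w a + subst7 y1 y2 y3 z1 z2 z3 w b.
Proof. exact: (rmD H). Qed.
Lemma ssN a : subst7 y1 y2 y3 z1 z2 z3 w (- a) = - subst7 y1 y2 y3 z1 z2 z3 w a.
Proof. exact: (rmN H). Qed.
Lemma ssM a b : subst7 y1 y2 y3 z1 z2 z3 w (a * b) = subst7 y1 y2 y3 z1 z2 z3 w a * subst7 y1 y2 y3 z1 z2 z3 w b.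
Proof. by have [_ _ fM] := H. Qed.
Lemma ssX a n : subst7 y1 y2 y3 z1 z2 z3 w (a ^+ n) = subst7 y1 y2 y3 z1 z2 z3 w a ^+ n.
Proof. exact: (rm_exp H). Qed.
Lemma ss1 : subst7 y1 y2 y3 z1 z2 z3 w 1 = 1.
Proof. by have [_ f1 _] := H. Qed.
Lemma ssn n : subst7 y1 y2 y3 z1 z2 z3 w n%:R = n%:R.
Proof. exact: (rm_nat H). Qed.
End SL.

Ltac tcomp := rewrite /tsub ?ssB ?ssD ?ssN ?ssX ?ssM ?ss1 ?ssn
  ?sX1 ?sX2 ?sX3 ?sD1 ?sD2 ?sD3 ?sLL ?xn0 ?xn1 ?xn2 ?dn0 ?dn1 ?dn2.

Section Sym.
Local Notation sym := Defs.symmetric.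
Lemma sym_add a b : sym a -> sym b -> sym (a + b).
Proof. by move=> ha hb s; rewrite (rmD (act_rm s)) ha hb. Qed.
Lemma sym_sub a b : sym a -> sym b -> sym (a - b).
Proof. by move=> ha hb s; have [fB _ _] := act_rm s; rewrite fB ha hb. Qed.
Lemma sym_opp a : sym a -> sym (- a).
Proof. by move=> ha s; rewrite (rmN (act_rm s)) ha. Qed.
Lemma sym_mul a b : sym a -> sym b -> sym (a * b).
Proof. by move=> ha hb s; have [_ _ fM] := act_rm s; rewrite fM ha hb. Qed.
Lemma sym_exp a n : sym a -> sym (a ^+ n).
Proof. by move=> ha s; rewrite (rm_exp (act_rm s)) ha. Qed.
Lemma sym_nat n : sym (n%:R).
Proof. by move=> s; rewrite (rm_nat (act_rm s)). Qed.
Lemma sym0 : sym 0.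
Proof. by move=> s; rewrite (rm0 (act_rm s)). Qed.
Lemma sym1 : sym 1.
Proof. by move=> s; have [_ f1 _] := act_rm s. Qed.
Lemma sym_emb c : sym (emb c).
Proof. move=> s; exact: semb. Qed.
End Sym.

Lemma rm_emb_nat n : emb n%:R = n%:R.
Proof. exact: (rm_nat emb_rm). Qed.

Lemma embK (N : nat) : (0 < N)%N -> emb (N%:R)^-1 * N%:R = 1.
Proof.
move=> HN; have [_ e1 eM] := emb_rm.
have hN : (N%:R : rat) != 0 by rewrite Num.Theory.pnatr_eq0 -lt0n.
have E : emb (N%:R) = (N%:R : P7) := rm_emb_nat N.
rewrite -E -eM (mulVf hN); exact: e1.
Qed.

Definition Jm (p : P7) := exists c0 c1 c2 c3 c4 c5 c6 : P7,
  Defs.symmetric c0 /\ Defs.symmetric c1 /\ Defs.symmetric c2 /\ Defs.symmetric c3 /\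
      Defs.symmetric c4 /\ Defs.symmetric c5 /\ Defs.symmetric c6 /\
      p = c0 * pt2 + c1 * pt3 + c2 * pt4 + c3 * pt5 + c4 * pt6 + c5 * pt7 + c6 * pt8.

Lemma Jm_add a b : Jm a -> Jm b -> Jm (a + b).
Proof.
case=> [c0 [c1 [c2 [c3 [c4 [c5 [c6 [h0 [h1 [h2 [h3 [h4 [h5 [h6 ->]]]]]]]]]]]]]].
case=> [e0 [e1 [e2 [e3 [e4 [e5 [e6 [k0 [k1 [k2 [k3 [k4 [k5 [k6 ->]]]]]]]]]]]]]].
exists (c0 + e0), (c1 + e1), (c2 + e2), (c3 + e3), (c4 + e4), (c5 + e5), (c6 + e6).
do 7 (split; first (apply: sym_add; assumption)).
move: pt2 pt3 pt4 pt5 pt6 pt7 pt8 => *; ring.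
Qed.

Lemma Jm_mul f a : Defs.symmetric f -> Jm a -> Jm (f * a).
Proof.
move=> hf.
case=> [c0 [c1 [c2 [c3 [c4 [c5 [c6 [h0 [h1 [h2 [h3 [h4 [h5 [h6 ->]]]]]]]]]]]]]].
exists (f * c0), (f * c1), (f * c2), (f * c3), (f * c4), (f * c5), (f * c6).
do 7 (split; first (apply: sym_mul; assumption)).
move: pt2 pt3 pt4 pt5 pt6 pt7 pt8 => *; ring.
Qed.

Lemma J_of_E (L : P7) (N : nat) c0 c1 c2 c3 c4 c5 c6 : (0 < N)%N ->
  N%:R * L = c0 * pt2 + c1 * pt3 + c2 * pt4 + c3 * pt5 + c4 * pt6 + c5 * pt7 + c6 * pt8 ->
  Defs.symmetric c0 -> Defs.symmetric c1 -> Defs.symmetric c2 -> Defs.symmetric c3 ->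
  Defs.symmetric c4 -> Defs.symmetric c5 -> Defs.symmetric c6 -> Jm L.
Proof.
move=> HN E h0 h1 h2 h3 h4 h5 h6.
have -> : L = emb (N%:R)^-1 * (N%:R * L) by rewrite mulrA embK // mul1r.
apply: Jm_mul; first exact: sym_emb.
exists c0, c1, c2, c3, c4, c5, c6; do 7 (split; first assumption); exact: E.
Qed.

Opaque X1 X2 X3 D1 D2 D3 LL.

Inductive tm := V of nat | Cn of nat | Ad of tm & tm | Sb of tm & tm | Ml of tm & tm
  | Pw of tm & nat | Ng of tm.
Fixpoint ev (e : nat -> P7) (t : tm) : P7 :=
  match t with
  | V i => e i | Cn n => n%:R | Ad a b => ev e a + ev e b | Sb a b => ev e a - ev e b
  | Ml a b => ev e a * ev e b | Pw a n => ev e a ^+ n | Ng a => - ev e a end.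

Definition env0 (i : nat) : P7 :=
  match i with 0 => X1 | 1 => X2 | 2 => X3 | 3 => D1 | 4 => D2 | 5 => D3 | _ => LL end%N.
Definition envt (a b c : nat) (i : nat) : P7 :=
  match i with 0 => xn a | 1 => xn b | 2 => xn c | 3 => dn a | 4 => dn b | 5 => dn c | _ => LL end%N.

Lemma ev_rm f e t : rm f -> f (ev e t) = ev (fun i => f (e i)) t.
Proof.
move=> H; have [fB f1 fM] := H.
elim: t => [i|n|a IHa b IHb|a IHa b IHb|a IHa b IHb|a IHa n|a IHa] /=.
- by [].
- exact: rm_nat.
- by rewrite (rmD H) IHa IHb.
- by rewrite fB IHa IHb.
- by rewrite fM IHa IHb.
- by rewrite (rm_exp H) IHa.
- by rewrite (rmN H) IHa.
Qed.

Lemma ev_ext e1 e2 t : (forall i, e1 i = e2 i) -> ev e1 t = ev e2 t.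
Proof. by move=> E; elim: t => /= [i|n|a -> b ->|a -> b ->|a -> b ->|a -> n|a ->]. Qed.

Lemma tsub_ev a b c t : tsub a b c (ev env0 t) = ev (envt a b c) t.
Proof.
rewrite (ev_rm _ _ (tsub_rm a b c)); apply: ev_ext.
case=> [|[|[|[|[|[|i]]]]]] /=.
- exact: tX1.
- exact: tX2.
- exact: tX3.
- exact: tD1.
- exact: tD2.
- exact: tD3.
- exact: tLL.
Qed.

Lemma sym_ev t :
  ev (envt 0 1 2) t = ev env0 t -> ev (envt 0 2 1) t = ev env0 t ->
  ev (envt 1 0 2) t = ev env0 t -> ev (envt 1 2 0) t = ev env0 t ->
  ev (envt 2 0 1) t = ev env0 t -> ev (envt 2 1 0) t = ev env0 t ->
  Defs.symmetric (ev env0 t).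
Proof.
move=> h1 h2 h3 h4 h5 h6; apply/symE.
split; first (rewrite tsub_ev; exact: h1).
split; first (rewrite tsub_ev; exact: h2).
split; first (rewrite tsub_ev; exact: h3).
split; first (rewrite tsub_ev; exact: h4).
split; first (rewrite tsub_ev; exact: h5).
rewrite tsub_ev; exact: h6.
Qed.

Ltac reif e :=
  lazymatch e with
  | X1 => constr:(V 0) | X2 => constr:(V 1) | X3 => constr:(V 2)
  | D1 => constr:(V 3) | D2 => constr:(V 4) | D3 => constr:(V 5) | LL => constr:(V 6)
  | ?a + ?b => let x := reif a in let y := reif b in constr:(Ad x y)
  | ?a - ?b => let x := reif a in let y := reif b in constr:(Sb x y)
  | ?a * ?b => let x := reif a in let y := reif b in constr:(Ml x y)
  | ?a ^+ ?n => let x := reif a in constr:(Pw x n)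
  | - ?a => let x := reif a in constr:(Ng x)
  | 1 => constr:(Cn 1)
  | 0 => constr:(Cn 0)
  | ?n%:R => constr:(Cn n)
  end.

Ltac gring := move: X1 X2 X3 D1 D2 D3 LL => ? ? ? ? ? ? ?; ring.
Ltac evsimp := cbn [ev envt env0]; rewrite ?xn0 ?xn1 ?xn2 ?dn0 ?dn1 ?dn2.

Ltac symev :=
  lazymatch goal with |- Defs.symmetric ?E =>
    let t := reif E in change (Defs.symmetric (ev env0 t)); apply: sym_ev; evsimp; gring end.

Definition Ps (a b : nat) : P7 := X1^+a * D1^+b + X2^+a * D2^+b + X3^+a * D3^+b.

Lemma sym_Ps a b : Defs.symmetric (Ps a b).
Proof.
rewrite /Ps.
let t := reif (X1^+a * D1^+b + X2^+a * D2^+b + X3^+a * D3^+b) in change (Defs.symmetric (ev env0 t)).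
apply: sym_ev; evsimp; move: X1 X2 X3 D1 D2 D3 LL => x1 x2 x3 d1 d2 d3 l;
  move: (x1^+a * d1^+b) (x2^+a * d2^+b) (x3^+a * d3^+b) => ? ? ?; ring.
Qed.

Definition e1x : P7 := X1 + X2 + X3.
Definition e2x : P7 := X1 * X2 + X1 * X3 + X2 * X3.
Definition e3x : P7 := X1 * X2 * X3.
Definition e1d : P7 := D1 + D2 + D3.
Definition e2d : P7 := D1 * D2 + D1 * D3 + D2 * D3.
Definition e3d : P7 := D1 * D2 * D3.
Lemma sym_e1x : Defs.symmetric e1x. Proof. rewrite /e1x; symev. Qed.
Lemma sym_e2x : Defs.symmetric e2x. Proof. rewrite /e2x; symev. Qed.
Lemma sym_e3x : Defs.symmetric e3x. Proof. rewrite /e3x; symev. Qed.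
Lemma sym_e1d : Defs.symmetric e1d. Proof. rewrite /e1d; symev. Qed.
Lemma sym_e2d : Defs.symmetric e2d. Proof. rewrite /e2d; symev. Qed.
Lemma sym_e3d : Defs.symmetric e3d. Proof. rewrite /e3d; symev. Qed.
Lemma sym_pt2 : Defs.symmetric pt2. Proof. rewrite /pt2 /p1 /p2 /p3; symev. Qed.
Lemma sym_pt3 : Defs.symmetric pt3. Proof. rewrite /pt3 /p1 /p2 /p3; symev. Qed.
Lemma sym_pt4 : Defs.symmetric pt4. Proof. rewrite /pt4 /p1 /p2 /p3; symev. Qed.
Lemma sym_pt5 : Defs.symmetric pt5. Proof. rewrite /pt5 /p1 /p2 /p3; symev. Qed.
Lemma sym_pt6 : Defs.symmetric pt6. Proof. rewrite /pt6 /p1 /p2 /p3; symev. Qed.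
Lemma sym_pt7 : Defs.symmetric pt7. Proof. rewrite /pt7 /p1 /p2 /p3; symev. Qed.
Lemma sym_pt8 : Defs.symmetric pt8. Proof. rewrite /pt8 /p1 /p2 /p3; symev. Qed.

Ltac symt := lazymatch goal with
 | |- Defs.symmetric (?a - ?b) => apply: (@sym_sub a b); [symt|symt]
 | |- Defs.symmetric (?a + ?b) => apply: (@sym_add a b); [symt|symt]
 | |- Defs.symmetric (?a * ?b) => apply: (@sym_mul a b); [symt|symt]
 | |- Defs.symmetric (- ?a) => apply: (@sym_opp a); symt
 | |- Defs.symmetric (?a ^+ ?n) => apply: (@sym_exp a n); symt
 | |- Defs.symmetric (Ps ?a ?b) => exact: (sym_Ps a b)
 | |- Defs.symmetric (emb ?c) => exact: (sym_emb c)
 | |- Defs.symmetric e1x => exact: sym_e1x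
 | |- Defs.symmetric e2x => exact: sym_e2x
 | |- Defs.symmetric e3x => exact: sym_e3x
 | |- Defs.symmetric e1d => exact: sym_e1d
 | |- Defs.symmetric e2d => exact: sym_e2d
 | |- Defs.symmetric e3d => exact: sym_e3d
 | |- Defs.symmetric 0 => exact: sym0
 | |- Defs.symmetric 1 => exact: sym1
 | |- Defs.symmetric (?n %:R) => exact: (sym_nat n)
 | |- Defs.symmetric pt2 => exact: sym_pt2
 | |- Defs.symmetric pt3 => exact: sym_pt3
 | |- Defs.symmetric pt4 => exact: sym_pt4
 | |- Defs.symmetric pt5 => exact: sym_pt5
 | |- Defs.symmetric pt6 => exact: sym_pt6
 | |- Defs.symmetric pt7 => exact: sym_pt7
 | |- Defs.symmetric pt8 => exact: sym_pt8
 | |- _ => assumption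
 end.

Definition bx (n : nat) : P7 :=
  match n with O => 1 | S O => X1 | S (S O) => X1 ^+ 2 | S (S (S O)) => X2 | S (S (S (S O))) => X1 * X2 | _ => X1 ^+ 2 * X2 end.
Definition bd (n : nat) : P7 :=
  match n with O => 1 | S O => D1 | S (S O) => D1 ^+ 2 | S (S (S O)) => D2 | S (S (S (S O))) => D1 * D2 | _ => D1 ^+ 2 * D2 end.
Definition B (i j : nat) : P7 := bx i * bd j.

Definition G (a : P7) := forall S : P7 -> Prop,
  (forall a b, S a -> S b -> S (a + b)) ->
  (forall f a, Defs.symmetric f -> S a -> S (f * a)) ->
  (forall i j, (i < 6)%N -> (j < 6)%N -> S (B i j)) -> S a.

Lemma G_add a b : G a -> G b -> G (a + b).
Proof. move=> Ga Gb S h1 h2 h3; apply h1; [exact: (Ga S h1 h2 h3) | exact: (Gb S h1 h2 h3)]. Qed.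
Lemma G_sym f a : Defs.symmetric f -> G a -> G (f * a).
Proof. move=> hf Ga S h1 h2 h3; apply h2; [exact: hf | exact: (Ga S h1 h2 h3)]. Qed.
Lemma G_B i j : (i < 6)%N -> (j < 6)%N -> G (B i j).
Proof. move=> hi hj S h1 h2 h3; exact: (h3 i j hi hj). Qed.
Lemma G_sub a b : G a -> G b -> G (a - b).
Proof.
move=> Ga Gb; rewrite -mulN1r; apply: G_add => //; apply: G_sym => //.
apply: sym_opp; exact: sym1.
Qed.

Ltac gsolve := lazymatch goal with
 | |- G (?a - ?b) => apply: (@G_sub a b); [gsolve|gsolve]
 | |- G (?a + ?b) => apply: (@G_add a b); [gsolve|gsolve]
 | |- G (B ?i ?j) => apply: (@G_B i j)
 | |- G (?f * ?a) => apply: (@G_sym f a); [symt|gsolve]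
 end.

Lemma G_mulr v : (forall i j, (i < 6)%N -> (j < 6)%N -> G (B i j * v)) -> forall a, G a -> G (a * v).
Proof.
move=> hB a Ga; apply: (Ga (fun a => G (a * v))).
- move=> x y Gx Gy; rewrite mulrDl; exact: G_add.
- move=> f x hf Gx; rewrite -mulrA; exact: G_sym.
- exact: hB.
Qed.

Lemma GX1 a : G a -> G (a * X1).
Proof.
apply: G_mulr => i j hi hj.
case: i hi => [|[|[|[|[|[|i]]]]]] hi //.
- rewrite (_ : B 0 j * X1 = B 1 j); first by apply: G_B.
  rewrite /B; cbn [bx]; gring.
- rewrite (_ : B 1 j * X1 = B 2 j); first by apply: G_B.
  rewrite /B; cbn [bx]; gring.
- rewrite (_ : B 2 j * X1 = e1x * B 2 j - e2x * B 1 j + e3x * B 0 j); first by gsolve.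
  rewrite /B /e1x /e2x /e3x; cbn [bx]; gring.
- rewrite (_ : B 3 j * X1 = B 4 j); first by apply: G_B.
  rewrite /B; cbn [bx]; gring.
- rewrite (_ : B 4 j * X1 = B 5 j); first by apply: G_B.
  rewrite /B; cbn [bx]; gring.
- rewrite (_ : B 5 j * X1 = e1x * B 5 j - e2x * B 4 j + e3x * B 3 j); first by gsolve.
  rewrite /B /e1x /e2x /e3x; cbn [bx]; gring.
Qed.

Lemma GX2 a : G a -> G (a * X2).
Proof.
apply: G_mulr => i j hi hj.
case: i hi => [|[|[|[|[|[|i]]]]]] hi //.
- rewrite (_ : B 0 j * X2 = B 3 j); first by apply: G_B.
  rewrite /B; cbn [bx]; gring.
- rewrite (_ : B 1 j * X2 = B 4 j); first by apply: G_B.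
  rewrite /B; cbn [bx]; gring.
- rewrite (_ : B 2 j * X2 = B 5 j); first by apply: G_B.
  rewrite /B; cbn [bx]; gring.
- rewrite (_ : B 3 j * X2 = e1x * B 3 j - B 4 j - e2x * B 0 j + e1x * B 1 j - B 2 j); first by gsolve.
  rewrite /B /e1x /e2x /e3x; cbn [bx]; gring.
- rewrite (_ : B 4 j * X2 = e1x * B 4 j - B 5 j - e3x * B 0 j); first by gsolve.
  rewrite /B /e1x /e2x /e3x; cbn [bx]; gring.
- rewrite (_ : B 5 j * X2 = e2x * B 4 j - e3x * B 3 j - e3x * B 1 j); first by gsolve.
  rewrite /B /e1x /e2x /e3x; cbn [bx]; gring.
Qed.

Lemma GD1 a : G a -> G (a * D1).
Proof.
apply: G_mulr => i j hi hj.
case: j hj => [|[|[|[|[|[|j]]]]]] hj //.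
- rewrite (_ : B i 0 * D1 = B i 1); first by apply: G_B.
  rewrite /B; cbn [bd]; gring.
- rewrite (_ : B i 1 * D1 = B i 2); first by apply: G_B.
  rewrite /B; cbn [bd]; gring.
- rewrite (_ : B i 2 * D1 = e1d * B i 2 - e2d * B i 1 + e3d * B i 0); first by gsolve.
  rewrite /B /e1d /e2d /e3d; cbn [bd]; gring.
- rewrite (_ : B i 3 * D1 = B i 4); first by apply: G_B.
  rewrite /B; cbn [bd]; gring.
- rewrite (_ : B i 4 * D1 = B i 5); first by apply: G_B.
  rewrite /B; cbn [bd]; gring.
- rewrite (_ : B i 5 * D1 = e1d * B i 5 - e2d * B i 4 + e3d * B i 3); first by gsolve.
  rewrite /B /e1d /e2d /e3d; cbn [bd]; gring.
Qed.

Lemma GD2 a : G a -> G (a * D2).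
Proof.
apply: G_mulr => i j hi hj.
case: j hj => [|[|[|[|[|[|j]]]]]] hj //.
- rewrite (_ : B i 0 * D2 = B i 3); first by apply: G_B.
  rewrite /B; cbn [bd]; gring.
- rewrite (_ : B i 1 * D2 = B i 4); first by apply: G_B.
  rewrite /B; cbn [bd]; gring.
- rewrite (_ : B i 2 * D2 = B i 5); first by apply: G_B.
  rewrite /B; cbn [bd]; gring.
- rewrite (_ : B i 3 * D2 = e1d * B i 3 - B i 4 - e2d * B i 0 + e1d * B i 1 - B i 2); first by gsolve.
  rewrite /B /e1d /e2d /e3d; cbn [bd]; gring.
- rewrite (_ : B i 4 * D2 = e1d * B i 4 - B i 5 - e3d * B i 0); first by gsolve.
  rewrite /B /e1d /e2d /e3d; cbn [bd]; gring.
- rewrite (_ : B i 5 * D2 = e2d * B i 4 - e3d * B i 3 - e3d * B i 1); first by gsolve.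
  rewrite /B /e1d /e2d /e3d; cbn [bd]; gring.
Qed.

Lemma GX3 a : G a -> G (a * X3).
Proof.
move=> Ga; rewrite (_ : a * X3 = e1x * a - a * X1 - a * X2).
  apply: G_sub; [apply: G_sub; [apply: G_sym => //; exact: sym_e1x | exact: GX1] | exact: GX2].
rewrite /e1x; gring.
Qed.

Lemma GD3 a : G a -> G (a * D3).
Proof.
move=> Ga; rewrite (_ : a * D3 = e1d * a - a * D1 - a * D2).
  apply: G_sub; [apply: G_sub; [apply: G_sym => //; exact: sym_e1d | exact: GD1] | exact: GD2].
rewrite /e1d; gring.
Qed.

Lemma sym_LL : Defs.symmetric LL.
Proof. symev. Qed.

Lemma GLL a : G a -> G (a * LL).
Proof. move=> Ga; rewrite mulrC; apply: G_sym => //; exact: sym_LL. Qed.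

Lemma G_all p : G p.
Proof.
apply: all_P7.
- move=> c; have E : B 0 0 = 1 := mulr1 1.
  have := @G_sym (emb c) (B 0 0) (sym_emb c) (@G_B 0 0 erefl erefl).
  rewrite E mulr1; exact.
- exact: G_add.
- exact: GX1.
- exact: GX2.
- exact: GX3.
- exact: GD1.
- exact: GD2.
- exact: GD3.
- exact: GLL.
Qed.

Definition O1 (a : P7) : P7 := tsub 0 1 2 (a * p1) + tsub 0 2 1 (a * p1) + tsub 1 0 2 (a * p1)
  + tsub 1 2 0 (a * p1) + tsub 2 0 1 (a * p1) + tsub 2 1 0 (a * p1).
Definition tp1 := Sb (Ad (Pw (V 1) 2) (Pw (V 2) 2)) (Pw (V 3) 2).
Lemma O1_ev t : O1 (ev env0 t) = ev (envt 0 1 2) (Ml t tp1) + ev (envt 0 2 1) (Ml t tp1)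
  + ev (envt 1 0 2) (Ml t tp1) + ev (envt 1 2 0) (Ml t tp1) + ev (envt 2 0 1) (Ml t tp1)
  + ev (envt 2 1 0) (Ml t tp1).
Proof. rewrite /O1 -[ev env0 t * p1]/(ev env0 (Ml t tp1)) !tsub_ev. reflexivity. Qed.

Ltac eqtac := rewrite /Ps /pt2 /pt3 /pt4 /pt5 /pt6 /pt7 /pt8 /p1 /p2 /p3; gring.
Lemma JO00 : Jm (O1 (B 0 0)).
Proof.
rewrite -[B 0 0]/(ev env0 (Ml (Cn 1) (Cn 1))) O1_ev; cbn [ev envt env0 tp1]; evsimp.
apply: (@J_of_E _ 1 (2%:R*1) 0 0 0 0 0 0 erefl); first eqtac.
all: symt.
Qed.
Lemma JO01 : Jm (O1 (B 0 1)).
Proof.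
rewrite -[B 0 1]/(ev env0 (Ml (Cn 1) (V 3))) O1_ev; cbn [ev envt env0 tp1]; evsimp.
apply: (@J_of_E _ 1 0 (2%:R*1) 0 0 0 0 0 erefl); first eqtac.
all: symt.
Qed.
Lemma JO02 : Jm (O1 (B 0 2)).
Proof.
rewrite -[B 0 2]/(ev env0 (Ml (Cn 1) (Pw (V 3) 2))) O1_ev; cbn [ev envt env0 tp1]; evsimp.
apply: (@J_of_E _ 1 0 0 0 0 0 (2%:R*1) 0 erefl); first eqtac.
all: symt.
Qed.
Lemma JO03 : Jm (O1 (B 0 3)).
Proof.
rewrite -[B 0 3]/(ev env0 (Ml (Cn 1) (V 4))) O1_ev; cbn [ev envt env0 tp1]; evsimp.
apply: (@J_of_E _ 1 ((Ps 0 1)) (0 - 1) 0 0 0 0 0 erefl); first eqtac.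
all: symt.
Qed.
Lemma JO04 : Jm (O1 (B 0 4)).
Proof.
rewrite -[B 0 4]/(ev env0 (Ml (Cn 1) (Ml (V 3) (V 4)))) O1_ev; cbn [ev envt env0 tp1]; evsimp.
apply: (@J_of_E _ 1 0 ((Ps 0 1)) 0 0 0 (0 - 1) 0 erefl); first eqtac.
all: symt.
Qed.
Lemma JO05 : Jm (O1 (B 0 5)).
Proof.
rewrite -[B 0 5]/(ev env0 (Ml (Cn 1) (Ml (Pw (V 3) 2) (V 4)))) O1_ev; cbn [ev envt env0 tp1]; evsimp.
apply: (@J_of_E _ 6 (3%:R*(Ps 0 1)*(Ps 0 2) - 2%:R*(Ps 0 3) - (Ps 0 1)^+3) (0 - 3%:R*(Ps 0 2) + 3%:R*(Ps 0 1)^+2) 0 0 0 0 0 erefl); first eqtac.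
all: symt.
Qed.
Lemma JO10 : Jm (O1 (B 1 0)).
Proof.
rewrite -[B 1 0]/(ev env0 (Ml (V 0) (Cn 1))) O1_ev; cbn [ev envt env0 tp1]; evsimp.
apply: (@J_of_E _ 1 0 0 (2%:R*1) 0 0 0 0 erefl); first eqtac.
all: symt.
Qed.
Lemma JO11 : Jm (O1 (B 1 1)).
Proof.
rewrite -[B 1 1]/(ev env0 (Ml (V 0) (V 3))) O1_ev; cbn [ev envt env0 tp1]; evsimp.
apply: (@J_of_E _ 1 0 0 0 (2%:R*1) 0 0 0 erefl); first eqtac.
all: symt.
Qed.
Lemma JO12 : Jm (O1 (B 1 2)).
Proof.
rewrite -[B 1 2]/(ev env0 (Ml (V 0) (Pw (V 3) 2))) O1_ev; cbn [ev envt env0 tp1]; evsimp.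
apply: (@J_of_E _ 3 ((Ps 1 0)*(Ps 0 1)^+2 + 2%:R*(Ps 1 2) - 2%:R*(Ps 0 1)*(Ps 1 1) - (Ps 1 0)*(Ps 0 2)) (0 - 2%:R*(Ps 1 0)*(Ps 0 1) + 2%:R*(Ps 1 1)) (0 - (Ps 0 1)^+2 + (Ps 0 2)) (4%:R*(Ps 0 1)) 0 (2%:R*(Ps 1 0)) 0 erefl); first eqtac.
all: symt.
Qed.
Lemma JO13 : Jm (O1 (B 1 3)).
Proof.
rewrite -[B 1 3]/(ev env0 (Ml (V 0) (V 4))) O1_ev; cbn [ev envt env0 tp1]; evsimp.
apply: (@J_of_E _ 1 0 0 ((Ps 0 1)) (0 - 1) 0 0 0 erefl); first eqtac.
all: symt.
Qed.
Lemma JO14 : Jm (O1 (B 1 4)).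
Proof.
rewrite -[B 1 4]/(ev env0 (Ml (V 0) (Ml (V 3) (V 4)))) O1_ev; cbn [ev envt env0 tp1]; evsimp.
apply: (@J_of_E _ 6 (2%:R*(Ps 0 1)*(Ps 1 1) - 2%:R*(Ps 1 2) - (Ps 1 0)*(Ps 0 1)^+2 + (Ps 1 0)*(Ps 0 2)) (0 - 2%:R*(Ps 1 1) + 2%:R*(Ps 1 0)*(Ps 0 1)) ((Ps 0 1)^+2 - (Ps 0 2)) (2%:R*(Ps 0 1)) 0 (0 - 2%:R*(Ps 1 0)) 0 erefl); first eqtac.
all: symt.
Qed.
Lemma JO15 : Jm (O1 (B 1 5)).
Proof.
rewrite -[B 1 5]/(ev env0 (Ml (V 0) (Ml (Pw (V 3) 2) (V 4)))) O1_ev; cbn [ev envt env0 tp1]; evsimp.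
apply: (@J_of_E _ 6 (0 - 3%:R*(Ps 1 0)*(Ps 0 3) + 3%:R*(Ps 0 1)*(Ps 1 2) + 3%:R*(Ps 0 1)*(Ps 3 0) - 3%:R*(Ps 1 0)*(Ps 2 1)) (0 - 6%:R*(Ps 1 2) + 3%:R*(Ps 1 0)*(Ps 0 2) - 6%:R*(Ps 3 0)) (4%:R*(Ps 0 3) + 6%:R*(Ps 2 1) - (Ps 0 1)^+3) (0 - 3%:R*(Ps 0 2) + 3%:R*(Ps 0 1)^+2) 0 0 0 erefl); first eqtac.
all: symt.
Qed.
Lemma JO20 : Jm (O1 (B 2 0)).
Proof.
rewrite -[B 2 0]/(ev env0 (Ml (Pw (V 0) 2) (Cn 1))) O1_ev; cbn [ev envt env0 tp1]; evsimp.
apply: (@J_of_E _ 1 0 0 0 0 (2%:R*1) 0 0 erefl); first eqtac.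
all: symt.
Qed.
Lemma JO21 : Jm (O1 (B 2 1)).
Proof.
rewrite -[B 2 1]/(ev env0 (Ml (Pw (V 0) 2) (V 3))) O1_ev; cbn [ev envt env0 tp1]; evsimp.
apply: (@J_of_E _ 6 (3%:R*(Ps 2 1) - 4%:R*(Ps 1 0)*(Ps 1 1) + 2%:R*(Ps 1 0)^+2*(Ps 0 1) - (Ps 0 1)*(Ps 2 0) - (Ps 0 3)) (0 - 2%:R*(Ps 1 0)^+2 + (Ps 0 2)) (4%:R*(Ps 1 1) - 4%:R*(Ps 1 0)*(Ps 0 1)) (8%:R*(Ps 1 0)) (4%:R*(Ps 0 1)) 0 0 erefl); first eqtac.
all: symt.
Qed.
Lemma JO22 : Jm (O1 (B 2 2)).
Proof.
rewrite -[B 2 2]/(ev env0 (Ml (Pw (V 0) 2) (Pw (V 3) 2))) O1_ev; cbn [ev envt env0 tp1]; evsimp.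
apply: (@J_of_E _ 18 (5%:R*(Ps 0 1)*(Ps 2 1) + 2%:R*(Ps 1 0)*(Ps 1 2) + (Ps 1 0)^+2*(Ps 0 2) - (Ps 2 0)*(Ps 0 2) + 5%:R*(Ps 1 0)^+2*(Ps 0 1)^+2 - 2%:R*(Ps 0 1)^+2*(Ps 2 0) - 14%:R*(Ps 1 0)*(Ps 0 1)*(Ps 1 1) + 4%:R*(Ps 1 1)^+2 - 3%:R*(Ps 0 2)^+2 - 5%:R*(Ps 0 1)*(Ps 0 3) + 6%:R*(Ps 0 1)^+2*(Ps 0 2) - (Ps 0 1)^+4) (6%:R*(Ps 2 1) + 6%:R*(Ps 1 0)*(Ps 1 1) - 6%:R*(Ps 1 0)^+2*(Ps 0 1) - 3%:R*(Ps 0 1)*(Ps 0 2)) (0 - 6%:R*(Ps 1 0)*(Ps 0 2) - 6%:R*(Ps 1 0)*(Ps 0 1)^+2 + 6%:R*(Ps 1 2) + 6%:R*(Ps 0 1)*(Ps 1 1)) (0 - 6%:R*(Ps 1 1) + 18%:R*(Ps 1 0)*(Ps 0 1)) (12%:R*(Ps 0 2)) (6%:R*(Ps 0 2)) 0 erefl); first eqtac.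
all: symt.
Qed.
Lemma JO23 : Jm (O1 (B 2 3)).
Proof.
rewrite -[B 2 3]/(ev env0 (Ml (Pw (V 0) 2) (V 4))) O1_ev; cbn [ev envt env0 tp1]; evsimp.
apply: (@J_of_E _ 12 (0 - 3%:R*(Ps 2 1) + (Ps 0 1)*(Ps 2 0) - 2%:R*(Ps 1 0)^+2*(Ps 0 1) + 4%:R*(Ps 1 0)*(Ps 1 1) + (Ps 0 3)) (2%:R*(Ps 1 0)^+2 - (Ps 0 2)) (4%:R*(Ps 1 0)*(Ps 0 1) - 4%:R*(Ps 1 1)) (0 - 8%:R*(Ps 1 0)) (8%:R*(Ps 0 1)) 0 0 erefl); first eqtac.
all: symt.
Qed.
Lemma JO24 : Jm (O1 (B 2 4)).
Proof.
rewrite -[B 2 4]/(ev env0 (Ml (Pw (V 0) 2) (Ml (V 3) (V 4)))) O1_ev; cbn [ev envt env0 tp1]; evsimp.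
apply: (@J_of_E _ 36 (11%:R*(Ps 1 0)^+2*(Ps 0 2) - 11%:R*(Ps 2 0)*(Ps 0 2) - 14%:R*(Ps 1 0)*(Ps 1 2) + (Ps 1 0)^+2*(Ps 0 1)^+2 + 5%:R*(Ps 0 1)^+2*(Ps 2 0) + 10%:R*(Ps 0 1)*(Ps 2 1) - 10%:R*(Ps 1 0)*(Ps 0 1)*(Ps 1 1) + 8%:R*(Ps 1 1)^+2 - 4%:R*(Ps 0 1)*(Ps 0 3) - 6%:R*(Ps 0 1)^+2*(Ps 0 2) + 3%:R*(Ps 0 2)^+2 + (Ps 0 1)^+4) (30%:R*(Ps 1 0)*(Ps 1 1) - 42%:R*(Ps 2 1) - 12%:R*(Ps 1 0)^+2*(Ps 0 1) + 12%:R*(Ps 0 1)*(Ps 0 2)) (30%:R*(Ps 1 2) + 6%:R*(Ps 1 0)*(Ps 0 1)^+2 - 30%:R*(Ps 1 0)*(Ps 0 2) - 6%:R*(Ps 0 1)*(Ps 1 1)) (18%:R*(Ps 1 0)*(Ps 0 1) - 30%:R*(Ps 1 1)) (24%:R*(Ps 0 2)) (0 - 6%:R*(Ps 0 2)) 0 erefl); first eqtac.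
all: symt.
Qed.
Lemma JO25 : Jm (O1 (B 2 5)).
Proof.
rewrite -[B 2 5]/(ev env0 (Ml (Pw (V 0) 2) (Ml (Pw (V 3) 2) (V 4)))) O1_ev; cbn [ev envt env0 tp1]; evsimp.
apply: (@J_of_E _ 24 (0 - 7%:R*(Ps 0 2)*(Ps 2 1) - (Ps 0 1)^+3*(Ps 2 0) - 10%:R*(Ps 2 0)*(Ps 0 3) + 7%:R*(Ps 0 1)*(Ps 2 0)*(Ps 0 2) + 6%:R*(Ps 1 0)^+2*(Ps 0 3) + 2%:R*(Ps 1 0)^+2*(Ps 0 1)^+3 + 7%:R*(Ps 0 1)^+2*(Ps 2 1) - 4%:R*(Ps 1 0)*(Ps 0 1)^+2*(Ps 1 1) - 12%:R*(Ps 1 0)*(Ps 0 1)*(Ps 1 2) + 12%:R*(Ps 1 1)*(Ps 1 2) - 3%:R*(Ps 0 1)^+2*(Ps 0 3) - (Ps 0 2)*(Ps 0 3)) (0 - 2%:R*(Ps 1 0)^+2*(Ps 0 2) - 6%:R*(Ps 1 0)^+2*(Ps 0 1)^+2 - 8%:R*(Ps 1 1)^+2 + 8%:R*(Ps 1 0)*(Ps 1 2) + 16%:R*(Ps 1 0)*(Ps 0 1)*(Ps 1 1) - 16%:R*(Ps 0 1)*(Ps 2 1) + (Ps 0 2)^+2 + 3%:R*(Ps 0 1)^+2*(Ps 0 2)) (0 - 16%:R*(Ps 1 0)*(Ps 0 3) + 24%:R*(Ps 0 1)*(Ps 1 2) - 8%:R*(Ps 0 1)^+2*(Ps 1 1))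 (0 - 24%:R*(Ps 1 2) + 8%:R*(Ps 1 0)*(Ps 0 1)^+2) (16%:R*(Ps 0 3)) 0 0 erefl); first eqtac.
all: symt.
Qed.
Lemma JO30 : Jm (O1 (B 3 0)).
Proof.
rewrite -[B 3 0]/(ev env0 (Ml (V 1) (Cn 1))) O1_ev; cbn [ev envt env0 tp1]; evsimp.
apply: (@J_of_E _ 1 ((Ps 1 0)) 0 (0 - 1) 0 0 0 0 erefl); first eqtac.
all: symt.
Qed.
Lemma JO31 : Jm (O1 (B 3 1)).
Proof.
rewrite -[B 3 1]/(ev env0 (Ml (V 1) (V 3))) O1_ev; cbn [ev envt env0 tp1]; evsimp.
apply: (@J_of_E _ 1 0 ((Ps 1 0)) 0 (0 - 1) 0 0 0 erefl); first eqtac.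
all: symt.
Qed.
Lemma JO32 : Jm (O1 (B 3 2)).
Proof.
rewrite -[B 3 2]/(ev env0 (Ml (V 1) (Pw (V 3) 2))) O1_ev; cbn [ev envt env0 tp1]; evsimp.
apply: (@J_of_E _ 6 ((Ps 1 0)*(Ps 0 2) - (Ps 1 0)*(Ps 0 1)^+2 + 2%:R*(Ps 0 1)*(Ps 1 1) - 2%:R*(Ps 1 2)) (2%:R*(Ps 1 0)*(Ps 0 1) - 2%:R*(Ps 1 1)) (0 - (Ps 0 2) + (Ps 0 1)^+2) (0 - 4%:R*(Ps 0 1)) 0 (4%:R*(Ps 1 0)) 0 erefl); first eqtac.
all: symt.
Qed.
Lemma JO33 : Jm (O1 (B 3 3)).
Proof.
rewrite -[B 3 3]/(ev env0 (Ml (V 1) (V 4))) O1_ev; cbn [ev envt env0 tp1]; evsimp.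
apply: (@J_of_E _ 1 ((Ps 1 1)) 0 0 (0 - 1) 0 0 0 erefl); first eqtac.
all: symt.
Qed.
Lemma JO34 : Jm (O1 (B 3 4)).
Proof.
rewrite -[B 3 4]/(ev env0 (Ml (V 1) (Ml (V 3) (V 4)))) O1_ev; cbn [ev envt env0 tp1]; evsimp.
apply: (@J_of_E _ 6 (0 - (Ps 1 0)*(Ps 0 1)^+2 - 2%:R*(Ps 1 2) + 2%:R*(Ps 0 1)*(Ps 1 1) + (Ps 1 0)*(Ps 0 2)) (2%:R*(Ps 1 0)*(Ps 0 1) + 4%:R*(Ps 1 1)) ((Ps 0 1)^+2 - (Ps 0 2)) (0 - 4%:R*(Ps 0 1)) 0 (0 - 2%:R*(Ps 1 0)) 0 erefl); first eqtac.
all: symt.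
Qed.
Lemma JO35 : Jm (O1 (B 3 5)).
Proof.
rewrite -[B 3 5]/(ev env0 (Ml (V 1) (Ml (Pw (V 3) 2) (V 4)))) O1_ev; cbn [ev envt env0 tp1]; evsimp.
apply: (@J_of_E _ 6 (3%:R*(Ps 1 0)*(Ps 0 1)*(Ps 0 2) - 6%:R*(Ps 0 1)*(Ps 1 2) - 6%:R*(Ps 0 1)*(Ps 3 0) + 6%:R*(Ps 1 0)*(Ps 2 1) + 4%:R*(Ps 1 0)*(Ps 0 3) - (Ps 1 0)*(Ps 0 1)^+3) (0 - 6%:R*(Ps 1 0)*(Ps 0 2) + 6%:R*(Ps 1 2) + 12%:R*(Ps 3 0) + 6%:R*(Ps 0 1)*(Ps 1 1)) (0 - 8%:R*(Ps 0 3) - 12%:R*(Ps 2 1) + 2%:R*(Ps 0 1)^+3) (3%:R*(Ps 0 2) - 3%:R*(Ps 0 1)^+2) 0 0 0 erefl); first eqtac.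
all: symt.
Qed.
Lemma JO40 : Jm (O1 (B 4 0)).
Proof.
rewrite -[B 4 0]/(ev env0 (Ml (Ml (V 0) (V 1)) (Cn 1))) O1_ev; cbn [ev envt env0 tp1]; evsimp.
apply: (@J_of_E _ 1 0 0 ((Ps 1 0)) 0 (0 - 1) 0 0 erefl); first eqtac.
all: symt.
Qed.
Lemma JO41 : Jm (O1 (B 4 1)).
Proof.
rewrite -[B 4 1]/(ev env0 (Ml (Ml (V 0) (V 1)) (V 3))) O1_ev; cbn [ev envt env0 tp1]; evsimp.
apply: (@J_of_E _ 12 (0 - 3%:R*(Ps 2 1) + 4%:R*(Ps 1 0)*(Ps 1 1) - 2%:R*(Ps 1 0)^+2*(Ps 0 1) + (Ps 0 1)*(Ps 2 0) + (Ps 0 3)) (2%:R*(Ps 1 0)^+2 - (Ps 0 2)) (0 - 4%:R*(Ps 1 1) + 4%:R*(Ps 1 0)*(Ps 0 1)) (4%:R*(Ps 1 0)) (0 - 4%:R*(Ps 0 1)) 0 0 erefl); first eqtac.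
all: symt.
Qed.
Lemma JO42 : Jm (O1 (B 4 2)).
Proof.
rewrite -[B 4 2]/(ev env0 (Ml (Ml (V 0) (V 1)) (Pw (V 3) 2))) O1_ev; cbn [ev envt env0 tp1]; evsimp.
apply: (@J_of_E _ 36 (0 - 4%:R*(Ps 1 0)^+2*(Ps 0 2) + 4%:R*(Ps 2 0)*(Ps 0 2) - 2%:R*(Ps 1 0)^+2*(Ps 0 1)^+2 - (Ps 0 1)^+2*(Ps 2 0) + 10%:R*(Ps 1 0)*(Ps 1 2) + 2%:R*(Ps 1 1)^+2 + 2%:R*(Ps 1 0)*(Ps 0 1)*(Ps 1 1) - 11%:R*(Ps 0 1)*(Ps 2 1) - 6%:R*(Ps 0 2)^+2 - (Ps 0 1)*(Ps 0 3) + 12%:R*(Ps 0 1)^+2*(Ps 0 2) - 2%:R*(Ps 0 1)^+4) (30%:R*(Ps 2 1) - 6%:R*(Ps 1 0)*(Ps 1 1) + 6%:R*(Ps 1 0)^+2*(Ps 0 1) - 15%:R*(Ps 0 1)*(Ps 0 2)) (0 - 42%:R*(Ps 1 2) + 30%:R*(Ps 0 1)*(Ps 1 1) - 12%:R*(Ps 1 0)*(Ps 0 1)^+2 + 24%:R*(Ps 1 0)*(Ps 0 2)) (0 - 30%:R*(Ps 1 1) + 18%:R*(Ps 1 0)*(Ps 0 1)) (0 - 12%:R*(Ps 0 2)) (12%:R*(Ps 0 2)) 0 erefl); first eqtac.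
all: symt.
Qed.
Lemma JO43 : Jm (O1 (B 4 3)).
Proof.
rewrite -[B 4 3]/(ev env0 (Ml (Ml (V 0) (V 1)) (V 4))) O1_ev; cbn [ev envt env0 tp1]; evsimp.
apply: (@J_of_E _ 12 (0 - 3%:R*(Ps 2 1) + 4%:R*(Ps 1 0)*(Ps 1 1) - 2%:R*(Ps 1 0)^+2*(Ps 0 1) + (Ps 0 1)*(Ps 2 0) + (Ps 0 3)) (2%:R*(Ps 1 0)^+2 - (Ps 0 2)) (8%:R*(Ps 1 1) + 4%:R*(Ps 1 0)*(Ps 0 1)) (0 - 8%:R*(Ps 1 0)) (0 - 4%:R*(Ps 0 1)) 0 0 erefl); first eqtac.
all: symt.
Qed.
Lemma JO44 : Jm (O1 (B 4 4)).
Proof.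
rewrite -[B 4 4]/(ev env0 (Ml (Ml (V 0) (V 1)) (Ml (V 3) (V 4)))) O1_ev; cbn [ev envt env0 tp1]; evsimp.
apply: (@J_of_E _ 36 (0 - 2%:R*(Ps 1 0)*(Ps 1 2) - 4%:R*(Ps 1 1)^+2 - (Ps 1 0)^+2*(Ps 0 2) + (Ps 2 0)*(Ps 0 2) - 5%:R*(Ps 1 0)^+2*(Ps 0 1)^+2 + 2%:R*(Ps 0 1)^+2*(Ps 2 0) + 14%:R*(Ps 1 0)*(Ps 0 1)*(Ps 1 1) - 5%:R*(Ps 0 1)*(Ps 2 1) + 3%:R*(Ps 0 2)^+2 + 5%:R*(Ps 0 1)*(Ps 0 3) - 6%:R*(Ps 0 1)^+2*(Ps 0 2) + (Ps 0 1)^+4) (0 - 6%:R*(Ps 2 1) - 6%:R*(Ps 1 0)*(Ps 1 1) + 6%:R*(Ps 1 0)^+2*(Ps 0 1) + 3%:R*(Ps 0 1)*(Ps 0 2)) (6%:R*(Ps 1 0)*(Ps 0 2) + 6%:R*(Ps 1 0)*(Ps 0 1)^+2 - 6%:R*(Ps 1 2) - 6%:R*(Ps 0 1)*(Ps 1 1)) (42%:R*(Ps 1 1) - 18%:R*(Ps 1 0)*(Ps 0 1)) (0 - 12%:R*(Ps 0 2)) (0 - 6%:R*(Ps 0 2)) 0 erefl); first eqtac.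
all: symt.
Qed.
Lemma JO45 : Jm (O1 (B 4 5)).
Proof.
rewrite -[B 4 5]/(ev env0 (Ml (Ml (V 0) (V 1)) (Ml (Pw (V 3) 2) (V 4)))) O1_ev; cbn [ev envt env0 tp1]; evsimp.
apply: (@J_of_E _ 24 (0 - (Ps 0 1)^+3*(Ps 2 0) - 2%:R*(Ps 2 0)*(Ps 0 3) + 5%:R*(Ps 0 1)*(Ps 2 0)*(Ps 0 2) - 5%:R*(Ps 0 2)*(Ps 2 1) - 12%:R*(Ps 0 1)*(Ps 1 1)^+2 + 12%:R*(Ps 1 1)*(Ps 1 2) - (Ps 0 1)^+2*(Ps 2 1) - 2%:R*(Ps 1 0)^+2*(Ps 0 3) + 8%:R*(Ps 1 0)*(Ps 0 1)^+2*(Ps 1 1) + (Ps 0 2)*(Ps 0 3) + (Ps 0 1)^+2*(Ps 0 3) - 2%:R*(Ps 1 0)^+2*(Ps 0 1)^+3) (8%:R*(Ps 1 1)^+2 + 4%:R*(Ps 0 1)*(Ps 2 1) + 2%:R*(Ps 1 0)^+2*(Ps 0 1)^+2 - 8%:R*(Ps 1 0)*(Ps 1 2) - 4%:R*(Ps 1 0)*(Ps 0 1)*(Ps 1 1) + 2%:R*(Ps 1 0)^+2*(Ps 0 2) - (Ps 0 2)^+2 - (Ps 0 1)^+2*(Ps 0 2)) (0 - 12%:R*(Ps 0 1)*(Ps 1 2) + 4%:R*(Ps 0 1)^+2*(Ps 1 1) + 8%:R*(Ps 1 0)*(Ps 0 3)) (0 - 4%:R*(Ps 1 0)*(Ps 0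 1)^+2 + 12%:R*(Ps 0 1)*(Ps 1 1)) (0 - 8%:R*(Ps 0 3)) 0 0 erefl); first eqtac.
all: symt.
Qed.
Lemma JO50 : Jm (O1 (B 5 0)).
Proof.
rewrite -[B 5 0]/(ev env0 (Ml (Ml (Pw (V 0) 2) (V 1)) (Cn 1))) O1_ev; cbn [ev envt env0 tp1]; evsimp.
apply: (@J_of_E _ 12 (3%:R*(Ps 1 0)*(Ps 2 0) - (Ps 3 0) - 2%:R*(Ps 1 0)^+3 + 3%:R*(Ps 1 2)) 0 (6%:R*(Ps 1 0)^+2 - 3%:R*(Ps 0 2)) 0 0 0 0 erefl); first eqtac.
all: symt.
Qed.
Lemma JO51 : Jm (O1 (B 5 1)).
Proof.
rewrite -[B 5 1]/(ev env0 (Ml (Ml (Pw (V 0) 2) (V 1)) (V 3))) O1_ev; cbn [ev envt env0 tp1]; evsimp.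
apply: (@J_of_E _ 24 (0 - 3%:R*(Ps 2 0)*(Ps 1 1) - 3%:R*(Ps 1 0)^+2*(Ps 1 1) + 2%:R*(Ps 0 1)*(Ps 3 0) + (Ps 1 0)^+3*(Ps 0 1) + 3%:R*(Ps 1 0)*(Ps 0 1)*(Ps 2 0) + (Ps 1 0)*(Ps 0 1)^+3 - 3%:R*(Ps 0 1)^+2*(Ps 1 1) - 3%:R*(Ps 1 0)*(Ps 0 1)*(Ps 0 2) + 3%:R*(Ps 1 1)*(Ps 0 2) + 6%:R*(Ps 0 1)*(Ps 1 2) - 4%:R*(Ps 1 0)*(Ps 0 3)) (0 - 8%:R*(Ps 3 0) - 4%:R*(Ps 1 0)^+3 + 6%:R*(Ps 1 0)*(Ps 0 2)) 0 (12%:R*(Ps 1 0)^+2 - 6%:R*(Ps 0 2)) 0 0 0 erefl); first eqtac.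
all: symt.
Qed.
Lemma JO52 : Jm (O1 (B 5 2)).
Proof.
rewrite -[B 5 2]/(ev env0 (Ml (Ml (Pw (V 0) 2) (V 1)) (Pw (V 3) 2))) O1_ev; cbn [ev envt env0 tp1]; evsimp.
apply: (@J_of_E _ 72 (18%:R*(Ps 0 1)^+2*(Ps 3 0) + 5%:R*(Ps 1 0)*(Ps 0 1)^+2*(Ps 2 0) + 24%:R*(Ps 1 0)*(Ps 1 1)^+2 - 11%:R*(Ps 1 0)*(Ps 2 0)*(Ps 0 2) + 11%:R*(Ps 0 2)*(Ps 3 0) + 6%:R*(Ps 1 0)^+2*(Ps 1 2) - 24%:R*(Ps 1 0)^+2*(Ps 0 1)*(Ps 1 1) - 17%:R*(Ps 1 0)*(Ps 0 1)*(Ps 2 1) + 6%:R*(Ps 1 0)^+3*(Ps 0 1)^+2 + 24%:R*(Ps 0 1)^+2*(Ps 1 2) - 29%:R*(Ps 1 0)*(Ps 0 1)*(Ps 0 3) + 12%:R*(Ps 1 1)*(Ps 0 3) - 24%:R*(Ps 1 1)*(Ps 2 1) + 6%:R*(Ps 2 0)*(Ps 1 2) - 7%:R*(Ps 0 2)*(Ps 1 2)) (0 - 8%:R*(Ps 1 0)^+3*(Ps 0 1) - 50%:R*(Ps 0 1)*(Ps 3 0) + 17%:R*(Ps 1 0)*(Ps 0 1)*(Ps 0 2) - 34%:R*(Ps 0 1)*(Ps 1 2) - 12%:R*(Ps 0 1)^+2*(Ps 1 1) + 24%:R*(Ps 1 0)*(Ps 2 1) + 8%:R*(Ps 1 0)*(Ps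 0 3) + 4%:R*(Ps 1 0)*(Ps 0 1)^+3) (0 - 10%:R*(Ps 1 0)^+2*(Ps 0 1)^+2 + 16%:R*(Ps 1 0)*(Ps 0 1)*(Ps 1 1) + 10%:R*(Ps 1 0)^+2*(Ps 0 2) - 8%:R*(Ps 1 1)^+2 - 16%:R*(Ps 1 0)*(Ps 1 2) - 5%:R*(Ps 0 2)^+2 + 26%:R*(Ps 0 1)*(Ps 0 3) + 42%:R*(Ps 0 1)*(Ps 2 1) - 4%:R*(Ps 0 1)^+4) (24%:R*(Ps 1 0)^+2*(Ps 0 1) - 24%:R*(Ps 0 3) - 24%:R*(Ps 2 1)) 0 (24%:R*(Ps 1 2)) 0 erefl); first eqtac.
all: symt.
Qed.
Lemma JO53 : Jm (O1 (B 5 3)).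
Proof.
rewrite -[B 5 3]/(ev env0 (Ml (Ml (Pw (V 0) 2) (V 1)) (V 4))) O1_ev; cbn [ev envt env0 tp1]; evsimp.
apply: (@J_of_E _ 24 (3%:R*(Ps 2 0)*(Ps 1 1) + 3%:R*(Ps 1 0)^+2*(Ps 1 1) - 5%:R*(Ps 1 0)^+3*(Ps 0 1) - 10%:R*(Ps 0 1)*(Ps 3 0) + 10%:R*(Ps 1 0)*(Ps 0 3) - (Ps 1 0)*(Ps 0 1)^+3 + 3%:R*(Ps 1 0)*(Ps 0 1)*(Ps 2 0) + 3%:R*(Ps 0 1)^+2*(Ps 1 1) + 3%:R*(Ps 1 0)*(Ps 0 1)*(Ps 0 2) - 3%:R*(Ps 1 1)*(Ps 0 2) - 6%:R*(Ps 0 1)*(Ps 1 2) + 6%:R*(Ps 1 0)*(Ps 2 1)) (8%:R*(Ps 1 0)^+3 + 16%:R*(Ps 3 0) - 12%:R*(Ps 1 0)*(Ps 0 2)) (24%:R*(Ps 1 0)*(Ps 1 1) - 24%:R*(Ps 2 1)) (0 - 12%:R*(Ps 1 0)^+2 + 6%:R*(Ps 0 2)) 0 0 0 erefl); first eqtac.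
all: symt.
Qed.
Lemma JO54 : Jm (O1 (B 5 4)).
Proof.
rewrite -[B 5 4]/(ev env0 (Ml (Ml (Pw (V 0) 2) (V 1)) (Ml (V 3) (V 4)))) O1_ev; cbn [ev envt env0 tp1]; evsimp.
apply: (@J_of_E _ 72 (5%:R*(Ps 1 0)*(Ps 0 1)^+2*(Ps 2 0) + 7%:R*(Ps 1 0)*(Ps 2 0)*(Ps 0 2) - 7%:R*(Ps 0 2)*(Ps 3 0) - 24%:R*(Ps 1 0)*(Ps 1 1)^+2 + (Ps 1 0)*(Ps 0 1)*(Ps 2 1) - 6%:R*(Ps 1 0)^+3*(Ps 0 1)^+2 + 18%:R*(Ps 1 0)^+2*(Ps 0 1)*(Ps 1 1) - 6%:R*(Ps 1 1)*(Ps 0 3) - 12%:R*(Ps 0 1)^+2*(Ps 1 2) + 13%:R*(Ps 1 0)*(Ps 0 1)*(Ps 0 3) + 30%:R*(Ps 1 1)*(Ps 2 1) - 12%:R*(Ps 2 0)*(Ps 1 2) + 5%:R*(Ps 0 2)*(Ps 1 2) - 12%:R*(Ps 0 1)^+2*(Ps 3 0)) (22%:R*(Ps 0 1)*(Ps 3 0) - 7%:R*(Ps 1 0)*(Ps 0 1)*(Ps 0 2) + 14%:R*(Ps 0 1)*(Ps 1 2) + 6%:R*(Ps 0 1)^+2*(Ps 1 1) + 4%:R*(Ps 1 0)^+3*(Ps 0 1) - 12%:R*(Ps 1 0)*(Ps 2 1) - 4%:R*(Ps 1 0)*(Ps 0 3) - 2%:R*(Ps 1 0)*(Ps 0 1)^+3)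 (2%:R*(Ps 1 0)^+2*(Ps 0 1)^+2 + 4%:R*(Ps 1 0)*(Ps 0 1)*(Ps 1 1) - 2%:R*(Ps 1 0)^+2*(Ps 0 2) + 16%:R*(Ps 1 1)^+2 - 4%:R*(Ps 1 0)*(Ps 1 2) + (Ps 0 2)^+2 - 10%:R*(Ps 0 1)*(Ps 0 3) - 30%:R*(Ps 0 1)*(Ps 2 1) + 2%:R*(Ps 0 1)^+4) (0 - 12%:R*(Ps 1 0)^+2*(Ps 0 1) + 36%:R*(Ps 1 0)*(Ps 1 1) + 12%:R*(Ps 0 3) - 24%:R*(Ps 2 1)) 0 (0 - 12%:R*(Ps 1 2)) 0 erefl); first eqtac.
all: symt.
Qed.
Lemma JO55 : Jm (O1 (B 5 5)).
Proof.
rewrite -[B 5 5]/(ev env0 (Ml (Ml (Pw (V 0) 2) (V 1)) (Ml (Pw (V 3) 2) (V 4)))) O1_ev; cbn [ev envt env0 tp1]; evsimp.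
apply: (@J_of_E _ 144 (37%:R*(Ps 1 0)*(Ps 0 1)*(Ps 1 1)^+2 - 63%:R*(Ps 1 0)*(Ps 0 2)*(Ps 2 1) - 33%:R*(Ps 0 1)*(Ps 0 2)*(Ps 3 0) + 134%:R*(Ps 3 0)*(Ps 0 3) + 116%:R*(Ps 1 0)*(Ps 1 1)*(Ps 1 2) - 105%:R*(Ps 2 1)*(Ps 1 2) + 96%:R*(Ps 1 0)*(Ps 0 1)*(Ps 2 0)*(Ps 0 2) - 65%:R*(Ps 1 1)^+3 - 140%:R*(Ps 1 0)*(Ps 2 0)*(Ps 0 3) + 2%:R*(Ps 0 1)^+3*(Ps 3 0) - 7%:R*(Ps 1 0)*(Ps 0 1)^+3*(Ps 2 0) + 5%:R*(Ps 0 1)*(Ps 1 1)*(Ps 2 1) + 51%:R*(Ps 0 1)*(Ps 2 0)*(Ps 1 2) - 16%:R*(Ps 1 0)^+2*(Ps 0 1)^+2*(Ps 1 1) - 44%:R*(Ps 1 0)^+2*(Ps 1 1)*(Ps 0 2) - 44%:R*(Ps 0 1)^+2*(Ps 2 0)*(Ps 1 1) + 44%:R*(Ps 2 0)*(Ps 1 1)*(Ps 0 2) + 2%:R*(Ps 1 0)^+3*(Ps 0 1)^+3 + 45%:R*(Ps 1 2)*(Ps 0 3) + 42%:R*(Ps 0 1)*(Ps 0 2)*(Ps 1 2) - 21%:R*(Ps 0 1)^+2*(Ps 1 1)*(Ps 0 2) - 94%:R*(Ps 1 0)*(Ps 0 2)*(Ps 0 3) + 18%:R*(Ps 1 0)*(Ps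 0 1)^+2*(Ps 0 3) + 7%:R*(Ps 1 0)*(Ps 0 1)^+3*(Ps 0 2) + 30%:R*(Ps 1 0)*(Ps 0 1)^+2*(Ps 2 1) + 3%:R*(Ps 0 1)*(Ps 1 1)*(Ps 0 3) - 18%:R*(Ps 1 0)*(Ps 1 1)*(Ps 3 0) + 30%:R*(Ps 1 0)^+2*(Ps 0 1)*(Ps 3 0) - 18%:R*(Ps 1 0)^+4*(Ps 1 1) + 6%:R*(Ps 1 0)^+5*(Ps 0 1) + 21%:R*(Ps 1 1)*(Ps 0 2)^+2 - 21%:R*(Ps 1 0)*(Ps 0 1)*(Ps 0 2)^+2) (0 - 60%:R*(Ps 1 0)^+2*(Ps 1 2) + 144%:R*(Ps 1 1)*(Ps 2 1) - 120%:R*(Ps 1 0)*(Ps 1 1)^+2 + 90%:R*(Ps 1 0)^+2*(Ps 0 1)*(Ps 1 1) - 180%:R*(Ps 0 2)*(Ps 3 0) - 84%:R*(Ps 1 0)*(Ps 0 1)*(Ps 2 1) + 42%:R*(Ps 0 1)^+2*(Ps 3 0) - 72%:R*(Ps 1 0)^+2*(Ps 3 0) + 108%:R*(Ps 1 0)*(Ps 0 2)^+2 - 12%:R*(Ps 1 0)*(Ps 0 1)*(Ps 0 3) - 90%:R*(Ps 0 2)*(Ps 1 2) - 18%:R*(Ps 0 1)^+2*(Ps 1 2) + 18%:R*(Ps 0 1)^+3*(Ps 1 1) - 6%:R*(Ps 1 0)*(Ps 0 1)^+4 - 6%:R*(Ps 1 0)^+3*(Ps 0 1)^+2 - 21%:R*(Ps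 0 1)*(Ps 1 1)*(Ps 0 2)) (36%:R*(Ps 1 1)*(Ps 1 2) - 84%:R*(Ps 1 0)*(Ps 0 1)*(Ps 1 2) - 48%:R*(Ps 0 1)*(Ps 1 1)^+2 + 72%:R*(Ps 1 0)*(Ps 0 1)^+2*(Ps 1 1) - 42%:R*(Ps 1 0)*(Ps 1 1)*(Ps 0 2) - 12%:R*(Ps 1 0)^+2*(Ps 0 1)^+3 + 66%:R*(Ps 1 0)^+2*(Ps 0 3) + 36%:R*(Ps 1 0)^+3*(Ps 1 1) - 12%:R*(Ps 1 0)^+4*(Ps 0 1) - 24%:R*(Ps 1 0)*(Ps 0 1)*(Ps 3 0) + 90%:R*(Ps 0 2)*(Ps 2 1) + 45%:R*(Ps 0 2)*(Ps 0 3) - 18%:R*(Ps 0 1)^+2*(Ps 0 3) - 24%:R*(Ps 0 1)^+2*(Ps 2 1)) (0 - 12%:R*(Ps 1 0)^+2*(Ps 0 1)^+2 + 120%:R*(Ps 1 1)^+2 + 72%:R*(Ps 1 0)*(Ps 3 0) + 24%:R*(Ps 1 0)*(Ps 1 2) - 42%:R*(Ps 0 2)^+2 + 36%:R*(Ps 0 1)*(Ps 0 3) - 12%:R*(Ps 0 1)*(Ps 2 1)) 0 0 0 erefl); first eqtac.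
all: symt.
Qed.

Lemma add6 (R : comNzRingType) (u1 u2 u3 u4 u5 u6 v1 v2 v3 v4 v5 v6 : R) :
  (u1 + v1) + (u2 + v2) + (u3 + v3) + (u4 + v4) + (u5 + v5) + (u6 + v6) =
  (u1 + u2 + u3 + u4 + u5 + u6) + (v1 + v2 + v3 + v4 + v5 + v6).
Proof. ring. Qed.
Lemma mul6 (R : comNzRingType) (f u1 u2 u3 u4 u5 u6 : R) :
  f * u1 + f * u2 + f * u3 + f * u4 + f * u5 + f * u6 = f * (u1 + u2 + u3 + u4 + u5 + u6).
Proof. ring. Qed.
Lemma permA (R : comNzRingType) (u1 u2 u3 u4 u5 u6 : R) :
  u3 + u5 + u1 + u6 + u2 + u4 = u1 + u2 + u3 + u4 + u5 + u6.
Proof. ring. Qed.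
Lemma permB (R : comNzRingType) (u1 u2 u3 u4 u5 u6 : R) :
  u6 + u4 + u5 + u2 + u3 + u1 = u1 + u2 + u3 + u4 + u5 + u6.
Proof. ring. Qed.
Lemma add18 (R : comNzRingType) (u1 u2 u3 u4 u5 u6 v1 v2 v3 v4 v5 v6 w1 w2 w3 w4 w5 w6 : R) :
  (u1 + v1 + w1) + (u2 + v2 + w2) + (u3 + v3 + w3) + (u4 + v4 + w4) + (u5 + v5 + w5) + (u6 + v6 + w6) =
  (u1 + u2 + u3 + u4 + u5 + u6) + (v1 + v2 + v3 + v4 + v5 + v6) + (w1 + w2 + w3 + w4 + w5 + w6).
Proof. ring. Qed.

Lemma tsubDp a b c x y : tsub a b c ((x + y) * p1) = tsub a b c (x * p1) + tsub a b c (y * p1).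
Proof. rewrite mulrDl; exact: (rmD (tsub_rm a b c)). Qed.

Lemma tsubS a b c f x : tsub a b c f = f -> tsub a b c ((f * x) * p1) = f * tsub a b c (x * p1).
Proof. move=> hf; rewrite -mulrA; have [_ _ fM] := tsub_rm a b c; rewrite fM hf; reflexivity. Qed.

Lemma O1_add x y : O1 (x + y) = O1 x + O1 y.
Proof. rewrite /O1 !tsubDp; exact: add6. Qed.

Lemma O1_sym f x : Defs.symmetric f -> O1 (f * x) = f * O1 x.
Proof.
move=> hf; have [h1 [h2 [h3 [h4 [h5 h6]]]]] := (iffLR (symE f)) hf.
rewrite /O1 (tsubS _ h1) (tsubS _ h2) (tsubS _ h3) (tsubS _ h4) (tsubS _ h5) (tsubS _ h6).
exact: mul6.
Qed.

Lemma JO1 a : Jm (O1 a).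
Proof.
have H := G_all a; rewrite /G in H; apply: (H (fun b => Jm (O1 b))).
- move=> x y hx hy; rewrite O1_add; exact: Jm_add.
- move=> f x hf hx; rewrite O1_sym //; exact: Jm_mul.
- move=> i j hi hj.
  case: i hi => [|[|[|[|[|[|i]]]]]] hi //; case: j hj => [|[|[|[|[|[|j]]]]]] hj //.
  - exact: JO00.
  - exact: JO01.
  - exact: JO02.
  - exact: JO03.
  - exact: JO04.
  - exact: JO05.
  - exact: JO10.
  - exact: JO11.
  - exact: JO12.
  - exact: JO13.
  - exact: JO14.
  - exact: JO15.
  - exact: JO20.
  - exact: JO21.
  - exact: JO22.
  - exact: JO23.
  - exact: JO24.
  - exact: JO25.
  - exact: JO30.
  - exact: JO31.
  - exact: JO32.
  - exact: JO33.
  - exact: JO34.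
  - exact: JO35.
  - exact: JO40.
  - exact: JO41.
  - exact: JO42.
  - exact: JO43.
  - exact: JO44.
  - exact: JO45.
  - exact: JO50.
  - exact: JO51.
  - exact: JO52.
  - exact: JO53.
  - exact: JO54.
  - exact: JO55.
Qed.

Lemma pick0 a b c : pick a b c 0 = a. Proof. reflexivity. Qed.
Lemma pick1 a b c : pick a b c 1 = b. Proof. reflexivity. Qed.
Lemma pick2 a b c : pick a b c 2 = c. Proof. reflexivity. Qed.

Definition O2 (a : P7) : P7 := tsub 0 1 2 (a * p2) + tsub 0 2 1 (a * p2) + tsub 1 0 2 (a * p2)
  + tsub 1 2 0 (a * p2) + tsub 2 0 1 (a * p2) + tsub 2 1 0 (a * p2).
Definition O3 (a : P7) : P7 := tsub 0 1 2 (a * p3) + tsub 0 2 1 (a * p3) + tsub 1 0 2 (a * p3)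
  + tsub 1 2 0 (a * p3) + tsub 2 0 1 (a * p3) + tsub 2 1 0 (a * p3).

Lemma tp2 : tsub 1 0 2 p1 = p2.
Proof. rewrite -[p1]/(ev env0 tp1) tsub_ev; cbn [ev envt env0 tp1]; evsimp; rewrite /p2; gring. Qed.
Lemma tp3 : tsub 2 1 0 p1 = p3.
Proof. rewrite -[p1]/(ev env0 tp1) tsub_ev; cbn [ev envt env0 tp1]; evsimp; rewrite /p3; gring. Qed.

Lemma key2 a b c x : tsub a b c (x * p2) = tsub b a c (tsub 1 0 2 x * p1).
Proof.
have E : x * p2 = tsub 1 0 2 (tsub 1 0 2 x * p1).
  have [_ _ fM] := tsub_rm 1 0 2.
  rewrite fM tp2 tsub_comp !pick0 !pick1 !pick2 tsub_id; reflexivity.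
rewrite E tsub_comp !pick0 !pick1 !pick2; reflexivity.
Qed.
Lemma key3 a b c x : tsub a b c (x * p3) = tsub c b a (tsub 2 1 0 x * p1).
Proof.
have E : x * p3 = tsub 2 1 0 (tsub 2 1 0 x * p1).
  have [_ _ fM] := tsub_rm 2 1 0.
  rewrite fM tp3 tsub_comp !pick0 !pick1 !pick2 tsub_id; reflexivity.
rewrite E tsub_comp !pick0 !pick1 !pick2; reflexivity.
Qed.

Lemma O2_O1 a : O2 a = O1 (tsub 1 0 2 a).
Proof. rewrite /O2 !key2 /O1; exact: permA. Qed.
Lemma O3_O1 a : O3 a = O1 (tsub 2 1 0 a).
Proof. rewrite /O3 !key3 /O1; exact: permB. Qed.

Lemma tsub3 a b c x y z : tsub a b c (x + y + z) = tsub a b c x + tsub a b c y + tsub a b c z.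
Proof. by rewrite !(rmD (tsub_rm a b c)). Qed.

Lemma IC_J p : in_ICsym p -> Jm p.
Proof.
case=> [[a1 [a2 [a3 Ep]]] sp].
have [h1 [h2 [h3 [h4 [h5 h6]]]]] := (iffLR (symE p)) sp.
have E6 : 6%:R * p = O1 a1 + O2 a2 + O3 a3.
  transitivity (tsub 0 1 2 p + tsub 0 2 1 p + tsub 1 0 2 p + tsub 1 2 0 p + tsub 2 0 1 p + tsub 2 1 0 p).
    rewrite h1 h2 h3 h4 h5 h6; move: p {Ep sp h1 h2 h3 h4 h5 h6} => q; ring.
  rewrite Ep !tsub3 /O1 /O2 /O3; exact: add18.
have J6 : Jm (6%:R * p).
  rewrite E6; apply: Jm_add; first apply: Jm_add.
  - exact: JO1.
  - rewrite O2_O1; exact: JO1.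
  - rewrite O3_O1; exact: JO1.
have -> : p = emb (6%:R)^-1 * (6%:R * p) by rewrite mulrA embK // mul1r.
apply: Jm_mul => //; exact: sym_emb.
Qed.

Lemma J_sym_ideal p : Jm p -> in_sym_ideal ptilde p.
Proof.
case=> [c0 [c1 [c2 [c3 [c4 [c5 [c6 [h0 [h1 [h2 [h3 [h4 [h5 [h6 ->]]]]]]]]]]]]]].
exists [:: c0; c1; c2; c3; c4; c5; c6]; split; first reflexivity.
split.
  move=> q; rewrite !inE.
  case/orP => [/eqP -> //|]; case/orP => [/eqP -> //|]; case/orP => [/eqP -> //|];
  case/orP => [/eqP -> //|]; case/orP => [/eqP -> //|]; case/orP => [/eqP -> //|].
  by move/eqP ->.
change (size ptilde) with 7%N.
rewrite !big_ord_recl big_ord0 /=.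
move: pt2 pt3 pt4 pt5 pt6 pt7 pt8 => *; ring.
Qed.

Lemma sym_ideal_J p : in_sym_ideal ptilde p -> Jm p.
Proof.
case=> c [hs [hc ->]].
case: c hs hc => [|c0 [|c1 [|c2 [|c3 [|c4 [|c5 [|c6 [|c7 c]]]]]]]] //= _ hc.
have h0 : Defs.symmetric c0 by apply: hc; rewrite inE eqxx.
have h1 : Defs.symmetric c1 by apply: hc; rewrite !inE eqxx !orbT.
have h2 : Defs.symmetric c2 by apply: hc; rewrite !inE eqxx !orbT.
have h3 : Defs.symmetric c3 by apply: hc; rewrite !inE eqxx !orbT.
have h4 : Defs.symmetric c4 by apply: hc; rewrite !inE eqxx !orbT.
have h5 : Defs.symmetric c5 by apply: hc; rewrite !inE eqxx !orbT.
have h6 : Defs.symmetric c6 by apply: hc; rewrite !inE eqxx !orbT.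
exists c0, c1, c2, c3, c4, c5, c6; do 7 (split; first assumption).
change (size ptilde) with 7%N.
rewrite !big_ord_recl big_ord0 /=.
move: pt2 pt3 pt4 pt5 pt6 pt7 pt8 => *; ring.
Qed.

Lemma J_IC p : Jm p -> in_ICsym p.
Proof.
case=> [c0 [c1 [c2 [c3 [c4 [c5 [c6 [h0 [h1 [h2 [h3 [h4 [h5 [h6 ->]]]]]]]]]]]]]].
split.
  exists (c0 + c1 * D1 + c2 * X1 + c3 * (X1 * D1) + c4 * X1 ^+ 2 + c5 * D1 ^+ 2 + c6 * (X1 ^+ 2 * D1 ^+ 2)),
         (c0 + c1 * D2 + c2 * X2 + c3 * (X2 * D2) + c4 * X2 ^+ 2 + c5 * D2 ^+ 2 + c6 * (X2 ^+ 2 * D2 ^+ 2)),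
         (c0 + c1 * D3 + c2 * X3 + c3 * (X3 * D3) + c4 * X3 ^+ 2 + c5 * D3 ^+ 2 + c6 * (X3 ^+ 2 * D3 ^+ 2)).
  rewrite /pt2 /pt3 /pt4 /pt5 /pt6 /pt7 /pt8.
  move: p1 p2 p3 X1 X2 X3 D1 D2 D3 => *; ring.
symt.
Qed.

Lemma ptilde_in g : g \in ptilde -> in_ICsym g.
Proof.
rewrite !inE.
case/orP => [/eqP ->|]; last case/orP => [/eqP ->|]; last case/orP => [/eqP ->|];
  last case/orP => [/eqP ->|]; last case/orP => [/eqP ->|]; last case/orP => [/eqP ->|];
  last move/eqP ->.
- split; last exact: sym_pt2. exists 1, 1, 1; rewrite /pt2; move: p1 p2 p3 X1 X2 X3 D1 D2 D3 => *; ring.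
- split; last exact: sym_pt3. exists D1, D2, D3; rewrite /pt3; move: p1 p2 p3 X1 X2 X3 D1 D2 D3 => *; ring.
- split; last exact: sym_pt4. exists X1, X2, X3; rewrite /pt4; move: p1 p2 p3 X1 X2 X3 D1 D2 D3 => *; ring.
- split; last exact: sym_pt5. exists (X1 * D1), (X2 * D2), (X3 * D3); rewrite /pt5; move: p1 p2 p3 X1 X2 X3 D1 D2 D3 => *; ring.
- split; last exact: sym_pt6. exists (X1 ^+ 2), (X2 ^+ 2), (X3 ^+ 2); rewrite /pt6; move: p1 p2 p3 X1 X2 X3 D1 D2 D3 => *; ring.
- split; last exact: sym_pt7. exists (D1 ^+ 2), (D2 ^+ 2), (D3 ^+ 2); rewrite /pt7; move: p1 p2 p3 X1 X2 X3 D1 D2 D3 => *; ring.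
- split; last exact: sym_pt8. exists (X1 ^+ 2 * D1 ^+ 2), (X2 ^+ 2 * D2 ^+ 2), (X3 ^+ 2 * D3 ^+ 2); rewrite /pt8; move: p1 p2 p3 X1 X2 X3 D1 D2 D3 => *; ring.
Qed.

Lemma ideal_iff p : in_ICsym p <-> in_sym_ideal ptilde p.
Proof. split; [move/IC_J; exact: J_sym_ideal | move/sym_ideal_J; exact: J_IC]. Qed.

Theorem theorem1p2 :
  (exists gens : seq P7, (forall g, g \in gens -> in_ICsym g) /\
     (forall p : P7, in_ICsym p <-> in_sym_ideal gens p)) /\
  (forall g, g \in ptilde -> in_ICsym g) /\
  (forall p : P7, in_ICsym p <-> in_sym_ideal ptilde p).
Proof.
split; first by exists ptilde; split; [exact: ptilde_in | exact: ideal_iff].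
split; [exact: ptilde_in | exact: ideal_iff].
Qed.
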